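(* Let $x_0\in\{a=0\}$ be an accumulation point of $A$, let $\lambda>\lambda_0$, let $f\in C^1(A)$ be a bounded solution of $a(x)f'+H(x,f)=\lambda$ in $A$, and let $u_{\lambda_0}$ be a Lipschitz viscosity solution of $a u''+H(x,u')=\lambda_0$ in $\mathbb R$. Then $\hat\lambda(x_0)\le\lambda_0$ and: (a) if $f\ge u'_{\lambda_0}$ on $A$, then $\lim_{x\to x_0,\,x\in A}f(x)=p^+_\lambda(x_0)>p^+_{\lambda_0}(x_0)\ge\hat p(x_0)$; (b) if $f\le u'_{\lambda_0}$ on $A$, then $\lim_{x\to x_0,\,x\in A}f(x)=p^-_\lambda(x_0)<p^-_{\lambda_0}(x_0)\le\hat p(x_0)$.
   Context: Deterministic setting: $a:\mathbb R\to[0,1]$ with $\sqrt a$ $\kappa$-Lipschitz and (A1$'$): $a\not\equiv0$ and every connected component of $A:=\{a>0\}$ is a bounded interval. $H\in\mathscr H_{sqc}(\alpha_0,\alpha_1,\gamma,\eta)$, $\gamma>2$, $\eta>0$: (H1) $\alpha_0|p|^\gamma-1/\alpha_0\le H(x,p)\le\alpha_1(|p|^\gamma+1)$, (H2) $|H(x,p)-H(x,q)|\le\alpha_1(|p|+|q|+1)^{\gamma-1}|p-q|$, (H3) $|H(x,p)-H(y,p)|\le\alpha_1(|p|^\gamma+1)|x-y|$, $H(x,\cdot)$ strictly quasiconvex with unique minimizer $\hat p(x)$, $H(x,p_1)-H(x,p_2)\ge\eta|p_1-p_2|$ for $p_1<p_2\le\hat p(x)$, $H(x,p_2)-H(x,p_1)\ge\eta|p_1-p_2|$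 for $p_2>p_1\ge\hat p(x)$. $\hat\lambda(x):=\min_pH(x,p)$; for $\lambda\ge\hat\lambda(x)$, $\{p:H(x,p)\le\lambda\}=[p^-_\lambda(x),p^+_\lambda(x)]$. $\lambda_0:=\inf\{\lambda:\ a u''+H(x,u')=\lambda$ admits a continuous viscosity supersolution on $\mathbb R\}$ (supersolution: $a\varphi''+H(x,\varphi')\le\lambda$ for $C^2$ $\varphi$ touching from below; subsolution: $\ge\lambda$ from above). Lipschitz viscosity solutions are $C^2$ on $A$, so $u'_{\lambda_0}$ is $C^1$ on $A$. *)

(* Defs.v *)
From Stdlib Require Import Reals Lra.
From Coquelicot Require Import Coquelicot.
Open Scope R_scope.

(* x^g for x >= 0 and real exponent g (with 0^g = 0 for g > 0). *)
Definition pw (x g : R) : R := if Rle_dec x 0 then 0 else Rpower x g.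

Definition a_assump (kappa : R) (a : R -> R) : Prop :=
  (forall x, 0 <= a x <= 1) /\
  (forall x y, Rabs (sqrt (a x) - sqrt (a y)) <= kappa * Rabs (x - y)).

(* The connected component of x in A = {a > 0}: all y such that the closed
   segment between x and y lies in A. *)
Definition in_component (a : R -> R) (x y : R) : Prop :=
  forall z, Rmin x y <= z <= Rmax x y -> 0 < a z.

(* (A1'): a is not identically 0 and every connected component of {a > 0}
   is a bounded interval (connected subsets of R are intervals). *)
Definition A1' (a : R -> R) : Prop :=
  (exists x, a x <> 0) /\
  (forall x, 0 < a x -> exists M, forall y, in_component a x y -> Rabs y <= M).

Definition strictly_quasiconvex (h : R -> R) : Prop :=
  forall p q t, p <> q -> 0 < t < 1 -> h (t * p + (1 - t) * q) < Rmax (h p) (h q).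

Definition H_sqc (alpha0 alpha1 gamma eta : R) (H : R -> R -> R)
  (phat : R -> R) : Prop :=
  0 < alpha0 /\ 0 < alpha1 /\ 2 < gamma /\ 0 < eta /\
  (forall x p, alpha0 * pw (Rabs p) gamma - / alpha0 <= H x p /\
               H x p <= alpha1 * (pw (Rabs p) gamma + 1)) /\
  (forall x p q, Rabs (H x p - H x q) <=
       alpha1 * pw (Rabs p + Rabs q + 1) (gamma - 1) * Rabs (p - q)) /\
  (forall x y p, Rabs (H x p - H y p) <=
       alpha1 * (pw (Rabs p) gamma + 1) * Rabs (x - y)) /\
  (forall x, strictly_quasiconvex (H x)) /\
  (forall x p, p <> phat x -> H x (phat x) < H x p) /\
  (forall x p1 p2, p1 < p2 <= phat x -> H x p1 - H x p2 >= eta * Rabs (p1 - p2)) /\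
  (forall x p1 p2, phat x <= p1 < p2 -> H x p2 - H x p1 >= eta * Rabs (p1 - p2)).

Definition lamhat (H : R -> R -> R) (x : R) : R :=
  real (Glb_Rbar (fun v => exists p, v = H x p)).

Definition pplus (H : R -> R -> R) (lam x : R) : R :=
  real (Lub_Rbar (fun p => H x p <= lam)).
Definition pminus (H : R -> R -> R) (lam x : R) : R :=
  real (Glb_Rbar (fun p => H x p <= lam)).

Definition C2 (phi : R -> R) : Prop :=
  (forall x, ex_derive phi x) /\
  (forall x, ex_derive (Derive phi) x) /\
  (forall x, continuous (Derive (Derive phi)) x).

Definition touches_below (phi u : R -> R) (x0 : R) : Prop :=
  phi x0 = u x0 /\ exists d, 0 < d /\ forall y, Rabs (y - x0) < d -> phi y <= u y.
Definition touches_above (phi u : R -> R) (x0 : R) : Prop :=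
  phi x0 = u x0 /\ exists d, 0 < d /\ forall y, Rabs (y - x0) < d -> u y <= phi y.

Definition visc_super (a : R -> R) (H : R -> R -> R) (lam : R) (u : R -> R) : Prop :=
  (forall x, continuous u x) /\
  forall phi x0, C2 phi -> touches_below phi u x0 ->
    a x0 * Derive (Derive phi) x0 + H x0 (Derive phi x0) <= lam.
Definition visc_sub (a : R -> R) (H : R -> R -> R) (lam : R) (u : R -> R) : Prop :=
  (forall x, continuous u x) /\
  forall phi x0, C2 phi -> touches_above phi u x0 ->
    a x0 * Derive (Derive phi) x0 + H x0 (Derive phi x0) >= lam.
Definition visc_sol a H lam u : Prop := visc_super a H lam u /\ visc_sub a H lam u.

Definition lambda0 (a : R -> R) (H : R -> R -> R) : Rbar :=
  Glb_Rbar (fun lam => exists u, visc_super a H lam u).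

Definition lipschitz (u : R -> R) : Prop :=
  exists L, forall x y, Rabs (u x - u y) <= L * Rabs (x - y).

Definition near_in_A (a : R -> R) (x0 : R) := within (fun y => 0 < a y) (locally x0).

(* Main.v *)
Require Import Defs.
From Stdlib Require Import Reals Lra Classical.
From Coquelicot Require Import Coquelicot.
Open Scope R_scope.

Lemma ball_R x e y : ball x e y <-> Rabs (y - x) < e.
Proof. unfold ball; simpl; unfold AbsRing_ball, abs, minus, plus, opp; simpl. tauto. Qed.

Lemma le_eps (x y r : R) : 0 < r -> (forall k, 0 < k -> k <= r -> x <= y + k) -> x <= y.
Proof.
  intros Hr H. destruct (Rle_dec x y) as [|n]; auto.
  assert (Hk : 0 < Rmin r ((x - y) / 2)) by (apply Rmin_pos; lra).
  specialize (H _ Hk (Rmin_l _ _)). assert (Rmin r ((x - y) / 2) <= (x-y)/2) by apply Rmin_r. lra.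
Qed.

Lemma sq_abs t : Rabs t * Rabs t = t^2.
Proof. rewrite <- Rabs_mult. rewrite Rabs_right. ring. apply Rle_ge. replace (t*t) with (Rsqr t) by (unfold Rsqr; ring). apply Rle_0_sqr. Qed.

Lemma pw_nonneg b g : 0 <= pw b g.
Proof. unfold pw. destruct (Rle_dec b 0); [lra|]. unfold Rpower. left; apply exp_pos. Qed.

Lemma pw_mono b B g : 0 <= g -> b <= B -> pw b g <= pw B g.
Proof.
  intros Hg Hb. unfold pw. destruct (Rle_dec b 0); destruct (Rle_dec B 0).
  - lra. - unfold Rpower; left; apply exp_pos. - lra.
  - apply Rle_Rpower_l; lra.
Qed.

Section AF.
Variables (kappa : R) (a : R -> R).
Hypothesis Ha : a_assump kappa a.

Lemma a_nonneg x : 0 <= a x.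
Proof. destruct Ha as [H _]; apply H. Qed.

Lemma sqrt_a_le1 x : sqrt (a x) <= 1.
Proof. destruct Ha as [H _]. rewrite <- sqrt_1. apply sqrt_le_1_alt. apply H. Qed.

Lemma a_lip x y : Rabs (a x - a y) <= 2 * Rabs kappa * Rabs (x - y).
Proof.
  destruct Ha as [H1 H2]. specialize (H2 x y).
  assert (ex : a x = sqrt (a x) * sqrt (a x)) by (rewrite sqrt_sqrt; [lra| apply H1]).
  assert (ey : a y = sqrt (a y) * sqrt (a y)) by (rewrite sqrt_sqrt; [lra| apply H1]).
  assert (s1 := sqrt_a_le1 x). assert (s2 := sqrt_a_le1 y).
  assert (p1 := sqrt_pos (a x)). assert (p2 := sqrt_pos (a y)).
  replace (a x - a y) with ((sqrt (a x) - sqrt (a y)) * (sqrt (a x) + sqrt (a y))) by lra.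
  rewrite Rabs_mult. rewrite (Rabs_right (sqrt (a x) + sqrt (a y))) by lra.
  assert (kappa * Rabs (x - y) <= Rabs kappa * Rabs (x-y)).
  { apply Rmult_le_compat_r. apply Rabs_pos. apply RRle_abs. }
  assert (0 <= Rabs (sqrt (a x) - sqrt (a y))) by apply Rabs_pos.
  nra.
Qed.

Lemma a_zero_bound x e : a e = 0 -> a x <= kappa^2 * (x - e)^2.
Proof.
  intros He. destruct Ha as [H1 H2]. specialize (H2 x e). rewrite He, sqrt_0, Rminus_0_r in H2.
  rewrite Rabs_right in H2 by apply Rle_ge, sqrt_pos.
  assert (ex : a x = sqrt (a x) * sqrt (a x)) by (rewrite sqrt_sqrt; [lra| apply H1]).
  assert (p1 := sqrt_pos (a x)).
  assert (sqrt (a x) * sqrt (a x) <= (kappa * Rabs (x - e))*(kappa * Rabs (x - e))) by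
    (apply Rmult_le_compat; lra).
  rewrite <- (sq_abs (x - e)).
  replace (kappa ^ 2 * (Rabs (x - e) * Rabs (x - e))) with ((kappa * Rabs (x - e))*(kappa * Rabs (x - e))) by ring.
  lra.
Qed.
End AF.

Lemma interval_right (a : R -> R) (C k2 x0 y : R) :
  (forall x, 0 <= a x) ->
  (forall x z, Rabs (a x - a z) <= C * Rabs (x - z)) ->
  (forall x e, a e = 0 -> a x <= k2 * (x - e)^2) ->
  a x0 = 0 -> 0 < a y ->
  exists l, 0 < l /\ l <= Rabs (y - x0) /\
    forall x, y <= x <= y + l -> 0 < a x /\ a x <= 4 * k2 * l^2.
Proof.
  intros Hnn Hlip Hz H0 Hy.
  assert (Hyx : y <> x0) by (intro; subst; lra).
  set (D := Rabs (y - x0)).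
  assert (HD : 0 < D) by (apply Rabs_pos_lt; lra).
  assert (Hy2: 0 < (y - x0)^2). { replace ((y-x0)^2) with (Rsqr (y-x0)) by (unfold Rsqr; ring). apply Rlt_0_sqr. lra. }
  assert (Hk2 : 0 <= k2).
  { specialize (Hz y x0 H0). destruct (Rle_dec 0 k2); auto. nra. }
  destruct (classic (forall x, y <= x <= y + D -> 0 < a x)) as [Hall | Hnall].
  - exists D. split; [lra| split; [lra|]]. intros x Hx. split; [apply Hall; auto|].
    eapply Rle_trans. apply (Hz x x0 H0).
    assert (Rabs (x - x0) <= 2 * D).
    { replace (x - x0) with ((x - y) + (y - x0)) by ring.
      eapply Rle_trans. apply Rabs_triang. rewrite Rabs_right by lra. unfold D in *; lra. }
    assert (0 <= Rabs (x - x0)) by apply Rabs_pos.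
    rewrite <- (sq_abs (x - x0)).
    assert (Rabs (x - x0) * Rabs (x - x0) <= 4 * D^2) by nra. nra.
  - apply not_all_ex_not in Hnall. destruct Hnall as [z0 Hz0].
    apply imply_to_and in Hz0. destruct Hz0 as [Hz0r Hz0a].
    assert (Ha0 : a z0 = 0) by (specialize (Hnn z0); lra).
    set (T := fun t => y <= t <= z0 /\ forall z, y <= z <= t -> 0 < a z).
    assert (Tb : bound T) by (exists z0; intros t [Ht _]; lra).
    assert (Ty : T y) by (split; [lra| intros z Hz1; replace z with y by lra; auto]).
    destruct (completeness T Tb (ex_intro _ y Ty)) as [b [Hub Hl]].
    assert (Hyb : y <= b) by (apply Hub; auto).
    assert (Hbz : b <= z0) by (apply Hl; intros t [Ht _]; lra).
    assert (Hbelow : forall x, y <= x < b -> 0 < a x).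
    { intros x Hx. destruct (classic (exists t, T t /\ x < t)) as [[t [Tt Hxt]]|Hn].
      - destruct Tt as [_ Tt]. apply Tt. lra.
      - exfalso. assert (b <= x). { apply Hl. intros t Tt. destruct (Rle_dec t x); auto.
          exfalso; apply Hn; exists t; split; auto; lra. } lra. }
    assert (Hab : a b = 0).
    { destruct (Rle_dec (a b) 0) as [|Hn]; [specialize (Hnn b); lra|]. exfalso.
      assert (Hbz0 : b < z0) by (destruct (Req_dec b z0); [subst; lra| lra]).
      set (d := Rmin ((a b) / (2 * (Rabs C + 1))) ((z0 - b)/2)).
      assert (Hd : 0 < d) by (apply Rmin_pos; [apply Rdiv_lt_0_compat; [lra| assert (0<= Rabs C) by apply Rabs_pos; lra] | lra]).
      assert (Tt : T (b + d)).
      { split. split. lra. assert (d <= (z0-b)/2) by apply Rmin_r. lra.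
        intros z Hz1. destruct (Rlt_dec z b) as [Hzb|Hzb]. apply Hbelow; lra.
        specialize (Hlip z b). assert (d <= (a b) / (2 * (Rabs C + 1))) by apply Rmin_l.
        assert (Rabs (z - b) <= d) by (rewrite Rabs_right; lra).
        assert (C * Rabs (z - b) <= (Rabs C + 1) * d).
        { assert (0 <= Rabs (z-b)) by apply Rabs_pos. assert (C <= Rabs C) by apply RRle_abs.
          assert (0 <= Rabs C) by apply Rabs_pos. nra. }
        assert ((Rabs C + 1) * d <= a b / 2).
        { assert (0 <= Rabs C) by apply Rabs_pos.
          apply (Rmult_le_compat_l (Rabs C + 1)) in H; [|lra].
          replace ((Rabs C + 1) * (a b / (2 * (Rabs C + 1)))) with (a b / 2) in H by (field; lra). lra. }
        assert (Hab := Rabs_def2 _ _ (Rle_lt_trans _ _ (a b) Hlip ltac:(lra))).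
        lra. }
      specialize (Hub _ Tt). lra. }
    assert (Hyb' : y < b) by (destruct (Req_dec y b); [subst; lra| lra]).
    exists ((b - y)/2). split; [lra|]. split.
    + unfold D. assert (z0 - y <= Rabs (y - x0)) by (unfold D in Hz0r; lra). lra.
    + intros x Hx. split. apply Hbelow; lra.
      eapply Rle_trans. apply (Hz x b Hab).
      replace (4 * k2 * ((b - y) / 2) ^ 2) with (k2 * (b-y)^2) by field.
      assert (0 < b - x <= b - y) by lra. assert ((x-b)^2 <= (b-y)^2) by nra. nra.
Qed.

Lemma interval_left (a : R -> R) (C k2 x0 y : R) :
  (forall x, 0 <= a x) ->
  (forall x z, Rabs (a x - a z) <= C * Rabs (x - z)) ->
  (forall x e, a e = 0 -> a x <= k2 * (x - e)^2) ->
  a x0 = 0 -> 0 < a y ->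
  exists l, 0 < l /\ l <= Rabs (y - x0) /\
    forall x, y - l <= x <= y -> 0 < a x /\ a x <= 4 * k2 * l^2.
Proof.
  intros Hnn Hlip Hz H0 Hy.
  destruct (interval_right (fun x => a (- x)) C k2 (- x0) (- y)) as [l [Hl1 [Hl2 Hl3]]].
  - intros; apply Hnn.
  - intros x z. replace (x - z) with (- ((- x) - (- z))) by ring. rewrite Rabs_Ropp. apply Hlip.
  - intros x e He. replace ((x - e)^2) with (((-x) - (-e))^2) by ring. apply Hz; auto.
  - rewrite Ropp_involutive; auto.
  - rewrite Ropp_involutive; auto.
  - exists l. split; auto. split.
    + replace (y - x0) with (- (- y - - x0)) by ring. rewrite Rabs_Ropp; auto.
    + intros x Hx. specialize (Hl3 (- x) ltac:(lra)). rewrite Ropp_involutive in Hl3. auto.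
Qed.

Lemma lub_char (E : R -> Prop) e0 B : E e0 -> (forall x, E x -> x <= B) ->
  (forall x, E x -> x <= real (Lub_Rbar E)) /\
  (forall b, (forall x, E x -> x <= b) -> real (Lub_Rbar E) <= b).
Proof.
  intros He0 HB. generalize (Lub_Rbar_correct E). destruct (Lub_Rbar E) as [r| |]; intros [Hub Hl]; simpl.
  - split. intros x Ex. apply (Hub x Ex). intros b Hb. apply (Hl (Finite b)). intros x Ex; apply Hb; auto.
  - exfalso. apply (Hl (Finite B)). intros x Ex; apply HB; auto.
  - exfalso. apply (Hub e0 He0).
Qed.

Lemma glb_char (E : R -> Prop) e0 B : E e0 -> (forall x, E x -> B <= x) ->
  (forall x, E x -> real (Glb_Rbar E) <= x) /\
  (forall b, (forall x, E x -> b <= x) -> b <= real (Glb_Rbar E)).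
Proof.
  intros He0 HB. generalize (Glb_Rbar_correct E). destruct (Glb_Rbar E) as [r| |]; intros [Hub Hl]; simpl.
  - split. intros x Ex. apply (Hub x Ex). intros b Hb. apply (Hl (Finite b)). intros x Ex; apply Hb; auto.
  - exfalso. apply (Hub e0 He0).
  - exfalso. apply (Hl (Finite B)). intros x Ex; apply HB; auto.
Qed.

Lemma glb_lub_opp (E : R -> Prop) e0 B1 B2 : E e0 -> (forall x, E x -> B1 <= x <= B2) ->
  real (Glb_Rbar E) = - real (Lub_Rbar (fun p => E (- p))).
Proof.
  intros He0 HB.
  destruct (glb_char E e0 B1 He0) as [G1 G2]. intros x Ex; apply (HB x Ex).
  destruct (lub_char (fun p => E (-p)) (-e0) (-B1)) as [L1 L2].
  rewrite Ropp_involutive; auto. intros x Ex. specialize (HB _ Ex); lra.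
  apply Rle_antisym.
  - assert (real (Lub_Rbar (fun p => E (- p))) <= - real (Glb_Rbar E)); [|lra].
    apply L2. intros x Ex. specialize (G1 _ Ex). lra.
  - assert (- real (Lub_Rbar (fun p => E (- p))) <= real (Glb_Rbar E)); [|lra].
    apply G2. intros x Ex. assert (E (- - x)) by (rewrite Ropp_involutive; auto).
    specialize (L1 _ H). lra.
Qed.

Lemma abs_bounds x : - Rabs x <= x <= Rabs x.
Proof. apply Rabs_le_between. lra. Qed.

Definition good1 (h : R -> R) (ph eta : R) : Prop :=
  0 < eta /\ (forall p, h ph <= h p) /\
  (forall p1 p2, p1 < p2 <= ph -> h p1 - h p2 >= eta * Rabs (p1 - p2)) /\
  (forall p1 p2, ph <= p1 < p2 -> h p2 - h p1 >= eta * Rabs (p1 - p2)) /\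
  (forall R0, exists C, 0 <= C /\ forall p q, Rabs p <= R0 -> Rabs q <= R0 -> Rabs (h p - h q) <= C * Rabs (p - q)).

Lemma good1_refl h ph eta : good1 h ph eta -> good1 (fun p => h (- p)) (- ph) eta.
Proof.
  intros [He [Hm [HL [HR Hl]]]]. split; auto. split.
  { intros p. rewrite Ropp_involutive. apply Hm. } split.
  { intros p1 p2 Hp. specialize (HR (- p2) (- p1) ltac:(lra)).
    replace (p1 - p2) with (- p2 - - p1) by ring. lra. } split.
  { intros p1 p2 Hp. specialize (HL (- p2) (- p1) ltac:(lra)).
    replace (p1 - p2) with (- p2 - - p1) by ring. lra. }
  intros R0. destruct (Hl R0) as [C [HC HC2]]. exists C. split; auto. intros p q Hp Hq.
  replace (p - q) with (- (- p - - q)) by ring. rewrite Rabs_Ropp. apply HC2; rewrite Rabs_Ropp; auto.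
Qed.

Definition sup_le (h : R -> R) (lam : R) : R := real (Lub_Rbar (fun p => h p <= lam)).
Definition inf_le (h : R -> R) (lam : R) : R := real (Glb_Rbar (fun p => h p <= lam)).

Section G1.
Variables (h : R -> R) (ph eta : R).
Hypothesis Hg : good1 h ph eta.

Lemma g1_bound lam p : h p <= lam -> Rabs (p - ph) <= (lam - h ph) / eta.
Proof.
  destruct Hg as [He [Hm [HL [HR Hl]]]]. intros Hp.
  apply (Rmult_le_reg_l eta); auto. replace (eta * ((lam - h ph) / eta)) with (lam - h ph) by (field; lra).
  destruct (Rtotal_order p ph) as [H|[H|H]].
  - specialize (HL p ph ltac:(lra)). lra.
  - subst. rewrite Rminus_diag, Rabs_R0. specialize (Hm ph). lra.
  - specialize (HR ph p ltac:(lra)). rewrite Rabs_minus_sym. lra.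
Qed.

Section L.
Variable lam : R.
Hypothesis Hlam : h ph <= lam.

Let E := fun p => h p <= lam.
Lemma E_bnd p : E p -> ph - (lam - h ph)/eta <= p <= ph + (lam - h ph)/eta.
Proof. intros Hp. assert (H := g1_bound lam p Hp). apply Rabs_le_between' in H. lra. Qed.

Lemma S1 : (forall p, h p <= lam -> p <= sup_le h lam) /\ ph <= sup_le h lam /\
           sup_le h lam <= ph + (lam - h ph)/eta.
Proof.
  destruct (lub_char E ph (ph + (lam - h ph)/eta)) as [L1 L2]. exact Hlam.
  intros x Ex. apply E_bnd; auto.
  split; [exact L1|]. split. apply L1; exact Hlam. apply L2. intros x Ex; apply E_bnd; auto.
Qed.

Lemma S2 p : sup_le h lam < p -> lam < h p.
Proof. intros Hp. destruct (Rlt_dec lam (h p)); auto. exfalso. assert (p <= sup_le h lam) by (apply S1; lra). lra. Qed.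

Lemma S3 e : 0 < e -> exists p, h p <= lam /\ sup_le h lam - e < p.
Proof.
  intros He. destruct (classic (exists p, h p <= lam /\ sup_le h lam - e < p)) as [|Hn]; auto.
  exfalso. destruct (lub_char E ph (ph + (lam - h ph)/eta)) as [L1 L2]. exact Hlam.
  intros x Ex. apply E_bnd; auto.
  assert (sup_le h lam <= sup_le h lam - e); [|lra].
  apply L2. intros x Ex. destruct (Rle_dec x (sup_le h lam - e)); auto. exfalso; apply Hn. exists x; split; auto; lra.
Qed.

Lemma S4 p e : 0 < e -> sup_le h lam + e <= p -> lam + eta * e / 2 <= h p.
Proof.
  intros He Hp. destruct Hg as [Het [Hm [HL [HR Hl]]]].
  assert (H1 := S2 (sup_le h lam + e/2) ltac:(lra)).
  destruct S1 as [_ [H2 _]].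
  specialize (HR (sup_le h lam + e/2) p ltac:(lra)). rewrite Rabs_left in HR by lra. nra.
Qed.

Lemma S5 p e : 0 < e -> ph <= p -> p <= sup_le h lam - e -> h p <= lam - eta * e / 2.
Proof.
  intros He Hp1 Hp2. destruct Hg as [Het [Hm [HL [HR Hl]]]].
  destruct (S3 (e/2)) as [p2 [Hp3 Hp4]]. lra.
  specialize (HR p p2 ltac:(lra)). rewrite Rabs_left in HR by lra. nra.
Qed.
End L.

Lemma S6 lam1 lam2 : lam1 < lam2 -> h ph <= lam1 -> sup_le h lam1 < sup_le h lam2.
Proof.
  intros H12 H1. assert (Het : 0 < eta) by apply Hg.
  destruct Hg as [_ [_ [_ [_ Hl]]]].
  destruct (Hl (Rabs ph + (lam1 - h ph)/eta + 1)) as [C [HC HC2]].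
  set (t := Rmin 1 ((lam2 - lam1) / (2 * C + 1))).
  assert (Ht : 0 < t) by (apply Rmin_pos; [lra| apply Rdiv_lt_0_compat; lra]).
  assert (Ht1 : t <= 1) by apply Rmin_l.
  assert (Ht2 : t <= (lam2 - lam1) / (2 * C + 1)) by apply Rmin_r.
  destruct (S1 lam1 H1) as [A1 [A2 A3]].
  destruct (S3 lam1 H1 t Ht) as [p2 [Hp2 Hp2']].
  assert (Hb := E_bnd lam1 p2 Hp2).
  set (q := sup_le h lam1 + t).
  assert (Hq : h q <= lam2).
  { assert (Hph := abs_bounds ph).
    assert (0 <= (lam1 - h ph)/eta) by (apply Rdiv_le_0_compat; lra).
    assert (Rabs q <= Rabs ph + (lam1 - h ph) / eta + 1).
    { apply Rabs_le. unfold q. lra. }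
    assert (Rabs p2 <= Rabs ph + (lam1 - h ph) / eta + 1).
    { apply Rabs_le. lra. }
    specialize (HC2 q p2 H0 H2).
    assert (A4 : p2 <= sup_le h lam1) by (apply A1; auto).
    rewrite (Rabs_right (q - p2)) in HC2 by (unfold q; lra).
    apply Rabs_le_between in HC2. destruct HC2 as [_ HC3].
    assert (C * (q - p2) <= C * (2 * t)) by (apply Rmult_le_compat_l; unfold q; lra).
    assert (C * (2 * t) <= lam2 - lam1).
    { apply (Rmult_le_compat_l (2*C+1)) in Ht2; [|lra].
      replace ((2 * C + 1) * ((lam2 - lam1) / (2 * C + 1))) with (lam2 - lam1) in Ht2 by (field; lra). nra. }
    lra. }
  assert (q <= sup_le h lam2) by (apply (S1 lam2); [lra| auto]).
  unfold q in H. lra.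
Qed.

Lemma lamhat_eq : real (Glb_Rbar (fun v => exists p, v = h p)) = h ph.
Proof.
  destruct Hg as [_ [Hm _]].
  rewrite (is_glb_Rbar_unique _ (Finite (h ph))); auto. split.
  - intros x [p ->]. simpl. apply Hm.
  - intros b Hb. apply (Hb (h ph)). exists ph; auto.
Qed.

End G1.

Section I1.
Variables (h : R -> R) (ph eta : R).
Hypothesis Hg : good1 h ph eta.
Let h' := fun p => h (- p).
Let Hg' := good1_refl h ph eta Hg.

Lemma inf_sup lam : h ph <= lam -> inf_le h lam = - sup_le h' lam.
Proof.
  intros Hl. unfold inf_le, sup_le, h'.
  apply (glb_lub_opp (fun p => h p <= lam) ph (ph - (lam - h ph)/eta) (ph + (lam - h ph)/eta)); auto.
  intros x Ex. apply (E_bnd h ph eta Hg lam x Ex).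
Qed.

Lemma h'ph lam : h ph <= lam -> h' (- ph) <= lam.
Proof. unfold h'. rewrite Ropp_involutive. auto. Qed.

Lemma I1 lam : h ph <= lam -> (forall p, h p <= lam -> inf_le h lam <= p) /\ inf_le h lam <= ph.
Proof.
  intros Hl. rewrite inf_sup by auto. destruct (S1 h' (-ph) eta Hg' lam (h'ph lam Hl)) as [A [B _]].
  split. intros p Hp. assert (- p <= sup_le h' lam). apply A. unfold h'. rewrite Ropp_involutive; auto. lra.
  lra.
Qed.

Lemma I2 lam p : h ph <= lam -> p < inf_le h lam -> lam < h p.
Proof.
  intros Hl Hp. rewrite inf_sup in Hp by auto.
  assert (H := S2 h' (-ph) eta Hg' lam (h'ph lam Hl) (- p) ltac:(lra)). unfold h' in H.
  rewrite Ropp_involutive in H; auto.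
Qed.

Lemma I4 lam p e : h ph <= lam -> 0 < e -> p <= inf_le h lam - e -> lam + eta * e / 2 <= h p.
Proof.
  intros Hl He Hp. rewrite inf_sup in Hp by auto.
  assert (H := S4 h' (-ph) eta Hg' lam (h'ph lam Hl) (- p) e He ltac:(lra)). unfold h' in H.
  rewrite Ropp_involutive in H; auto.
Qed.

Lemma I5 lam p e : h ph <= lam -> 0 < e -> p <= ph -> inf_le h lam + e <= p -> h p <= lam - eta * e / 2.
Proof.
  intros Hl He Hp1 Hp2. rewrite inf_sup in Hp2 by auto.
  assert (H := S5 h' (-ph) eta Hg' lam (h'ph lam Hl) (- p) e He ltac:(lra) ltac:(lra)). unfold h' in H.
  rewrite Ropp_involutive in H; auto.
Qed.

Lemma I6 lam1 lam2 : lam1 < lam2 -> h ph <= lam1 -> inf_le h lam2 < inf_le h lam1.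
Proof.
  intros H12 Hl. rewrite !inf_sup by lra.
  assert (H := S6 h' (-ph) eta Hg' lam1 lam2 H12 (h'ph lam1 Hl)). lra.
Qed.
End I1.

Definition qf (al be ga : R) : R -> R := fun x => al + be * x + ga * (x * x).

Lemma qf_is_derive al be ga x : is_derive (qf al be ga) x (be + 2 * ga * x).
Proof. unfold qf. auto_derive; auto. ring. Qed.

Lemma qf_D al be ga x : Derive (qf al be ga) x = be + 2 * ga * x.
Proof. apply is_derive_unique, qf_is_derive. Qed.

Lemma qf_DD al be ga x : Derive (Derive (qf al be ga)) x = 2 * ga.
Proof.
  rewrite (Derive_ext _ (fun x => be + 2 * ga * x)) by (intros; apply qf_D).
  apply is_derive_unique. auto_derive; auto. ring.
Qed.

Lemma qf_C2 al be ga : C2 (qf al be ga).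
Proof.
  split; [|split].
  - intros x. eexists; apply qf_is_derive.
  - intros x. apply (ex_derive_ext (fun x => be + 2 * ga * x)).
    intros t; symmetry; apply qf_D. auto_derive; auto.
  - intros x. apply (continuous_ext (fun _ => 2 * ga)).
    intros t; symmetry; apply qf_DD. apply continuous_const.
Qed.

Lemma div_le_pos A B h k : 0 < h * k -> A * k <= B * h -> A / h <= B / k.
Proof.
  intros Hhk H. assert (h <> 0) by (intro; subst; lra). assert (k <> 0) by (intro; subst; lra).
  replace (A / h) with ((A * k) * / (h * k)) by (field; auto).
  replace (B / k) with ((B * h) * / (h * k)) by (field; auto).
  apply Rmult_le_compat_r; auto. left; apply Rinv_0_lt_compat; auto.
Qed.

Lemma div_le_neg A B h k : h * k < 0 -> B * h <= A * k -> A / h <= B / k.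
Proof.
  intros Hhk H. assert (h <> 0) by (intro; subst; lra). assert (k <> 0) by (intro; subst; lra).
  replace (A / h) with ((- (A * k)) * / (- (h * k))) by (field; auto).
  replace (B / k) with ((- (B * h)) * / (- (h * k))) by (field; auto).
  apply Rmult_le_compat_r. left; apply Rinv_0_lt_compat; lra. lra.
Qed.

Lemma cvx_slope (v : R -> R) (y r : R) :
  (forall p q s, y - r <= p -> p < q -> q < s -> s <= y + r -> v q * (s - p) <= (s - q) * v p + (q - p) * v s) ->
  forall h k, - r <= h -> h < k -> k <= r -> h <> 0 -> k <> 0 ->
   (v (y + h) - v y) / h <= (v (y + k) - v y) / k.
Proof.
  intros Hc h k H1 H2 H3 Hh Hk.
  destruct (Rlt_dec k 0) as [Hk0|Hk0].
  - specialize (Hc (y + h) (y + k) y ltac:(lra) ltac:(lra) ltac:(lra) ltac:(lra)).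
    apply div_le_pos. nra. replace (y + k - (y + h)) with (k - h) in Hc by ring.
    replace (y - (y + h)) with (- h) in Hc by ring. replace (y - (y + k)) with (-k) in Hc by ring. nra.
  - destruct (Rlt_dec h 0) as [Hh0|Hh0].
    + specialize (Hc (y + h) y (y + k) ltac:(lra) ltac:(lra) ltac:(lra) ltac:(lra)).
      apply div_le_neg. nra.
      replace (y + k - (y + h)) with (k - h) in Hc by ring.
      replace (y - (y + h)) with (- h) in Hc by ring. replace (y + k - y) with k in Hc by ring. nra.
    + specialize (Hc y (y + h) (y + k) ltac:(lra) ltac:(lra) ltac:(lra) ltac:(lra)).
      apply div_le_pos. nra.
      replace (y + k - y) with k in Hc by ring.
      replace (y + h - y) with h in Hc by ring. replace (y + k - (y + h)) with (k - h) in Hc by ring. nra.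
Qed.

Lemma lim_cauchy (S : R -> R) r K : 0 < r -> 0 <= K ->
  (forall h k, 0 < Rabs h <= r -> 0 < Rabs k <= r -> Rabs (S h - S k) <= K * Rabs (h - k)) ->
  exists l, forall h, 0 < Rabs h <= r -> Rabs (S h - l) <= K * Rabs h.
Proof.
  intros Hr HK HS.
  set (E := fun w => exists h, 0 < h <= r /\ w = S h - K * h).
  assert (Eb : bound E).
  { exists (S r + K * r). intros w [h [Hh ->]].
    assert (Hr' : 0 < Rabs r <= r) by (rewrite Rabs_right; lra).
    assert (Hh' : 0 < Rabs h <= r) by (rewrite Rabs_right; lra).
    specialize (HS h r Hh' Hr'). apply Rabs_le_between in HS. rewrite Rabs_left1 in HS by lra. nra. }
  destruct (completeness E Eb (ex_intro _ (S r - K * r) (ex_intro _ r (conj (conj Hr (Rle_refl r)) eq_refl))))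
    as [l [Hub Hl]].
  exists l.
  assert (Hpos : forall h, 0 < h <= r -> Rabs (S h - l) <= K * Rabs h).
  { intros h Hh. rewrite (Rabs_right h) by lra. apply Rabs_le.
    assert (S h - K * h <= l) by (apply Hub; exists h; split; auto).
    assert (l <= S h + K * h).
    { apply Hl. intros w [h' [Hh' ->]].
      assert (Hh1 : 0 < Rabs h <= r) by (rewrite Rabs_right; lra).
      assert (Hh2 : 0 < Rabs h' <= r) by (rewrite Rabs_right; lra).
      specialize (HS h' h Hh2 Hh1). apply Rabs_le_between in HS.
      assert (Rabs (h' - h) <= h' + h) by (apply Rabs_le; lra). nra. }
    lra. }
  intros h Hh. destruct (Rlt_dec 0 h) as [Hh0|Hh0].
  - apply Hpos. rewrite Rabs_right in Hh; lra.
  - assert (Hhn : h < 0).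
    { apply Rnot_lt_le in Hh0. destruct Hh0 as [|Eh]; auto. subst. rewrite Rabs_R0 in Hh. lra. }
    rewrite (Rabs_left h) in * by auto.
    apply (le_eps _ _ 1); [lra|]. intros k Hk1 Hk2.
    set (k' := Rmin r (k / (2 * K + 1))).
    assert (Hk' : 0 < k' <= r).
    { split. apply Rmin_pos; [lra| apply Rdiv_lt_0_compat; lra]. apply Rmin_l. }
    assert (Hk3 : k' <= k / (2 * K + 1)) by apply Rmin_r.
    assert (Hk4 : (2 * K + 1) * (k / (2 * K + 1)) = k) by (field; lra).
    assert (Hk5 : 0 < k / (2 * K + 1)) by (apply Rdiv_lt_0_compat; lra).
    assert (H1 := Hpos k' Hk').
    assert (Hk'' : 0 < Rabs k' <= r) by (rewrite Rabs_right; lra).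
    assert (Hh' : 0 < Rabs h <= r) by (rewrite Rabs_left; lra).
    specialize (HS h k' Hh' Hk'').
    assert (Rabs (h - k') <= - h + k') by (rewrite Rabs_left1 by lra; lra).
    assert (Rabs (S h - l) <= Rabs (S h - S k') + Rabs (S k' - l)).
    { replace (S h - l) with ((S h - S k') + (S k' - l)) by ring. apply Rabs_triang. }
    rewrite (Rabs_right k') in H1 by lra.
    assert (2 * K * k' <= k) by nra.
    nra.
Qed.

Lemma qf_cont al be ga x : continuity_pt (qf al be ga) x.
Proof. apply derivable_continuous_pt. exists (be + 2 * ga * x). apply is_derive_Reals. apply qf_is_derive. Qed.

Section V.
Variables (a : R -> R) (H : R -> R -> R) (lam0 : R) (u : R -> R) (L : R).
Hypothesis HL : forall x y, Rabs (u x - u y) <= L * Rabs (x - y).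

Lemma L_nonneg : 0 <= L.
Proof. specialize (HL 1 0). assert (H0 := Rabs_pos (u 1 - u 0)). replace (1 - 0) with 1 in HL by ring.
  rewrite Rabs_R1 in HL. lra. Qed.

Lemma u_cont x : continuity_pt u x.
Proof.
  apply continuity_pt_locally. intros eps. assert (HL0 := L_nonneg).
  assert (Hd : 0 < eps / (L + 1)) by (apply Rdiv_lt_0_compat; [apply cond_pos| lra]).
  exists (mkposreal _ Hd). intros z Hz. apply ball_R in Hz. simpl in Hz.
  eapply Rle_lt_trans. apply HL.
  apply (Rle_lt_trans _ ((L+1) * Rabs (z - x))). assert (0 <= Rabs (z-x)) by apply Rabs_pos. nra.
  apply (Rmult_lt_compat_l (L+1)) in Hz; [|lra].
  replace ((L + 1) * (eps / (L + 1))) with (pos eps) in Hz by (field; lra). exact Hz.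
Qed.

Lemma psi_cont al be ga x : continuity_pt (fun x => u x - qf al be ga x) x.
Proof. apply (continuity_pt_minus u (qf al be ga)). apply u_cont. apply qf_cont. Qed.

Lemma super_min (Hs : visc_super a H lam0 u) al be ga s t m : s < m < t ->
  (forall x, s <= x <= t -> u m - qf al be ga m <= u x - qf al be ga x) ->
  a m * (2 * ga) + H m (be + 2 * ga * m) <= lam0.
Proof.
  intros Hm Hmin. destruct Hs as [_ Hs].
  specialize (Hs (qf (al + (u m - qf al be ga m)) be ga) m (qf_C2 _ _ _)).
  rewrite qf_D, qf_DD in Hs. apply Hs. split.
  - unfold qf; ring.
  - exists (Rmin (m - s) (t - m)). split. apply Rmin_pos; lra.
    intros y Hy. assert (Rmin (m - s) (t - m) <= m - s) by apply Rmin_l.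
    assert (Rmin (m - s) (t - m) <= t - m) by apply Rmin_r.
    apply Rabs_def2 in Hy. specialize (Hmin y ltac:(lra)). unfold qf in *. lra.
Qed.

Lemma sub_max (Hs : visc_sub a H lam0 u) al be ga s t m : s < m < t ->
  (forall x, s <= x <= t -> u x - qf al be ga x <= u m - qf al be ga m) ->
  a m * (2 * ga) + H m (be + 2 * ga * m) >= lam0.
Proof.
  intros Hm Hmin. destruct Hs as [_ Hs].
  specialize (Hs (qf (al + (u m - qf al be ga m)) be ga) m (qf_C2 _ _ _)).
  rewrite qf_D, qf_DD in Hs. apply Hs. split.
  - unfold qf; ring.
  - exists (Rmin (m - s) (t - m)). split. apply Rmin_pos; lra.
    intros y Hy. assert (Rmin (m - s) (t - m) <= m - s) by apply Rmin_l.
    assert (Rmin (m - s) (t - m) <= t - m) by apply Rmin_r.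
    apply Rabs_def2 in Hy. specialize (Hmin y ltac:(lra)). unfold qf in *. lra.
Qed.

Lemma slope_max al be ga s t m : s < m < t ->
  (forall x, s <= x <= t -> u x - qf al be ga x <= u m - qf al be ga m) ->
  Rabs (be + 2 * ga * m) <= L.
Proof.
  intros Hm Hmax. set (sg := be + 2 * ga * m).
  assert (Hk : forall k, s <= m + k <= t -> sg * k + ga * (k * k) >= - L * Rabs k).
  { intros k Hk. specialize (Hmax (m + k) Hk). specialize (HL (m + k) m).
    replace (m + k - m) with k in HL by ring. apply Rabs_le_between in HL.
    unfold qf, sg in *. nra. }
  assert (Hga := Rabs_pos ga). assert (Hga2 := abs_bounds ga).
  apply Rabs_le. split.
  - apply (le_eps _ _ 1); [lra|]. intros k' Hk1 Hk2.
    set (k := Rmin (t - m) (k' / (Rabs ga + 1))).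
    assert (H1 : 0 < k) by (apply Rmin_pos; [lra| apply Rdiv_lt_0_compat; lra]).
    assert (H2 : k <= t - m) by apply Rmin_l. assert (H3 : k <= k' / (Rabs ga + 1)) by apply Rmin_r.
    assert (H4 : (Rabs ga + 1) * (k' / (Rabs ga + 1)) = k') by (field; lra).
    specialize (Hk k ltac:(lra)). rewrite Rabs_right in Hk by lra.
    assert (Hs : sg + ga * k >= - L) by nra.
    nra.
  - apply (le_eps _ _ 1); [lra|]. intros k' Hk1 Hk2.
    set (k := Rmin (m - s) (k' / (Rabs ga + 1))).
    assert (H1 : 0 < k) by (apply Rmin_pos; [lra| apply Rdiv_lt_0_compat; lra]).
    assert (H2 : k <= m - s) by apply Rmin_l. assert (H3 : k <= k' / (Rabs ga + 1)) by apply Rmin_r.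
    assert (H4 : (Rabs ga + 1) * (k' / (Rabs ga + 1)) = k') by (field; lra).
    specialize (Hk (- k) ltac:(lra)). rewrite Rabs_Ropp, Rabs_right in Hk by lra.
    assert (Hs : sg - ga * k <= L) by nra.
    nra.
Qed.

End V.

Section R1.
Variables (kappa alpha0 alpha1 gamma eta : R) (a : R -> R) (H : R -> R -> R) (phat : R -> R).
Hypothesis Ha : a_assump kappa a.
Hypothesis HH : H_sqc alpha0 alpha1 gamma eta H phat.
Variables (lam0 : R) (u : R -> R) (L : R).
Hypothesis HL : forall x y, Rabs (u x - u y) <= L * Rabs (x - y).
Hypothesis Hsup : visc_super a H lam0 u.
Hypothesis Hsub : visc_sub a H lam0 u.

Lemma H_lower x p : - / alpha0 <= H x p.
Proof.
  destruct HH as [Ha0 [_ [_ [_ [HH1 _]]]]]. destruct (HH1 x p) as [H1 _].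
  assert (0 <= alpha0 * pw (Rabs p) gamma) by (apply Rmult_le_pos; [lra| apply pw_nonneg]). lra.
Qed.

Lemma H_upper x p R0 : Rabs p <= R0 -> H x p <= alpha1 * (pw R0 gamma + 1).
Proof.
  intros Hp. destruct HH as [_ [Ha1 [Hg [_ [HH1 _]]]]]. destruct (HH1 x p) as [_ H1].
  assert (pw (Rabs p) gamma <= pw R0 gamma) by (apply pw_mono; lra). nra.
Qed.

Lemma a_lower y x : Rabs (x - y) <= a y / (2 * (2 * Rabs kappa + 1)) -> a y / 2 <= a x.
Proof.
  intros Hx. assert (Hk := Rabs_pos kappa). assert (Hay := a_nonneg kappa a Ha y).
  assert (Hl := a_lip kappa a Ha x y). apply Rabs_le_between in Hl.
  assert (2 * Rabs kappa * Rabs (x - y) <= a y / 2).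
  { apply (Rmult_le_compat_l (2 * Rabs kappa)) in Hx; [|lra].
    assert (2 * Rabs kappa * (a y / (2 * (2 * Rabs kappa + 1))) <= a y / 2).
    { apply (Rmult_le_reg_r (2 * (2 * Rabs kappa + 1))); [lra|].
      replace (2 * Rabs kappa * (a y / (2 * (2 * Rabs kappa + 1))) * (2 * (2 * Rabs kappa + 1))) with (2 * Rabs kappa * a y) by (field; lra).
      nra. }
    lra. }
  lra.
Qed.

Lemma u_reg y : 0 < a y -> exists l K r, 0 < r /\ 0 <= K /\ Derive u y = l /\ Rabs l <= L /\
  (forall h, 0 < Rabs h <= r -> Rabs ((u (y + h) - u y) / h - l) <= K * Rabs h) /\ is_derive u y l.
Proof.
  intros Hy.
  assert (HL0 := L_nonneg u L HL).
  assert (Ha0 : 0 < alpha0) by apply HH.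
  assert (Ha1 : 0 < alpha1) by apply HH.
  set (C0 := Rabs lam0 + / alpha0 + alpha1 * (pw L gamma + 1)).
  assert (HC0 : 0 <= C0).
  { unfold C0. assert (0 <= pw L gamma) by apply pw_nonneg. assert (0 < / alpha0) by (apply Rinv_0_lt_compat; lra).
    assert (0 <= Rabs lam0) by apply Rabs_pos. nra. }
  set (K := 2 * C0 / a y + 1).
  assert (HK : C0 < a y / 2 * K).
  { unfold K. replace (a y / 2 * (2 * C0 / a y + 1)) with (C0 + a y / 2) by (field; lra). lra. }
  assert (HK0 : 0 <= K) by (unfold K; assert (0 <= 2 * C0 / a y) by (apply Rdiv_le_0_compat; lra); lra).
  set (r := a y / (2 * (2 * Rabs kappa + 1))).
  assert (Hr : 0 < r) by (unfold r; apply Rdiv_lt_0_compat; [lra| assert (Hk := Rabs_pos kappa); lra]).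
  assert (Har : forall x, y - r <= x <= y + r -> a y / 2 <= a x).
  { intros x Hx. apply a_lower. apply Rabs_le. unfold r in *. lra. }
  set (w2 := fun x => - u x + K / 2 * ((x - y) * (x - y))).
  assert (Hc2 : forall p q s, y - r <= p -> p < q -> q < s -> s <= y + r ->
            w2 q * (s - p) <= (s - q) * w2 p + (q - p) * w2 s).
  { intros p q s Hp Hpq Hqs Hs.
    destruct (Rle_dec (w2 q * (s - p)) ((s - q) * w2 p + (q - p) * w2 s)) as [|Hn]; auto. exfalso.
    pose (v2 := fun x => u x - K / 2 * ((x - y) * (x - y))).
    pose (sg := (v2 s - v2 p) / (s - p)).
    pose (al := v2 p - sg * p + K / 2 * (y * y)). pose (be := sg - K * y). pose (ga := K / 2).
    assert (Ep : u p - qf al be ga p = 0). unfold qf, al, be, ga, sg, v2. field. lra.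
    assert (Es : u s - qf al be ga s = 0) by (unfold qf, al, be, ga, sg, v2; field; lra).
    assert (Eq : u q - qf al be ga q < 0).
    { apply Rnot_le_lt in Hn. unfold w2 in Hn.
      assert (Hsp : 0 < s - p) by lra.
      assert (E1 : u q - qf al be ga q = ((s - p) * v2 q - (s - q) * v2 p - (q - p) * v2 s) / (s - p))
        by (unfold qf, al, be, ga, sg, v2; field; lra).
      rewrite E1. unfold Rdiv. assert (0 < / (s - p)) by (apply Rinv_0_lt_compat; lra).
      assert ((s - p) * v2 q - (s - q) * v2 p - (q - p) * v2 s < 0) by (unfold v2; nra). nra. }
    destruct (continuity_ab_min (fun x => u x - qf al be ga x) p s ltac:(lra) (fun c _ => psi_cont u L HL al be ga c))
      as [m [Hm1 Hm2]].
    assert (Hmq := Hm1 q ltac:(lra)). simpl in Hmq.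
    assert (Hmp : m <> p) by (intro; subst; lra). assert (Hms : m <> s) by (intro; subst; lra).
    assert (V := super_min a H lam0 u Hsup al be ga p s m ltac:(lra) Hm1).
    assert (Hx := Har m ltac:(lra)). assert (Hl := H_lower m (be + 2 * ga * m)).
    assert (a y / 2 * K <= a m * K) by (apply Rmult_le_compat_r; lra).
    assert (lam0 <= Rabs lam0) by apply RRle_abs.
    unfold C0 in HK. assert (0 <= alpha1 * (pw L gamma + 1)) by (assert (0 <= pw L gamma) by apply pw_nonneg; nra).
    replace (a m * (2 * ga)) with (a m * K) in V by (unfold ga; field). lra. }
  set (w1 := fun x => u x + K / 2 * ((x - y) * (x - y))).
  assert (Hc1 : forall p q s, y - r <= p -> p < q -> q < s -> s <= y + r ->
            w1 q * (s - p) <= (s - q) * w1 p + (q - p) * w1 s).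
  { intros p q s Hp Hpq Hqs Hs.
    destruct (Rle_dec (w1 q * (s - p)) ((s - q) * w1 p + (q - p) * w1 s)) as [|Hn]; auto. exfalso.
    pose (sg := (w1 s - w1 p) / (s - p)).
    pose (al := w1 p - sg * p - K / 2 * (y * y)). pose (be := sg + K * y). pose (ga := - (K / 2)).
    assert (Ep : u p - qf al be ga p = 0) by (unfold qf, al, be, ga, sg, w1; field; lra).
    assert (Es : u s - qf al be ga s = 0) by (unfold qf, al, be, ga, sg, w1; field; lra).
    assert (Eq : 0 < u q - qf al be ga q).
    { apply Rnot_le_lt in Hn.
      assert (Hsp : 0 < s - p) by lra.
      assert (E1 : u q - qf al be ga q = ((s - p) * w1 q - (s - q) * w1 p - (q - p) * w1 s) / (s - p))
        by (unfold qf, al, be, ga, sg, w1; field; lra).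
      rewrite E1. apply Rdiv_lt_0_compat; lra. }
    destruct (continuity_ab_maj (fun x => u x - qf al be ga x) p s ltac:(lra) (fun c _ => psi_cont u L HL al be ga c))
      as [m [Hm1 Hm2]].
    assert (Hmq := Hm1 q ltac:(lra)). simpl in Hmq.
    assert (Hmp : m <> p) by (intro; subst; lra). assert (Hms : m <> s) by (intro; subst; lra).
    assert (V := sub_max a H lam0 u Hsub al be ga p s m ltac:(lra) Hm1).
    assert (Sl := slope_max u L HL al be ga p s m ltac:(lra) Hm1).
    assert (Hx := Har m ltac:(lra)). assert (Hu := H_upper m (be + 2 * ga * m) L Sl).
    assert (a y / 2 * K <= a m * K) by (apply Rmult_le_compat_r; lra).
    assert (- lam0 <= Rabs lam0) by (rewrite <- Rabs_Ropp; apply RRle_abs).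
    assert (0 < / alpha0) by (apply Rinv_0_lt_compat; lra).
    unfold C0 in HK.
    replace (a m * (2 * ga)) with (- (a m * K)) in V by (unfold ga; field). lra. }
  set (S := fun h => (u (y + h) - u y) / h).
  assert (HS : forall h k, 0 < Rabs h <= r -> 0 < Rabs k <= r -> Rabs (S h - S k) <= K / 2 * Rabs (h - k)).
  { assert (Hmain : forall h k, 0 < Rabs h <= r -> 0 < Rabs k <= r -> h < k -> Rabs (S h - S k) <= K / 2 * Rabs (h - k)).
    { intros h k Hh Hk Hhk.
      assert (Hh0 : h <> 0) by (intro; subst; rewrite Rabs_R0 in Hh; lra).
      assert (Hk0 : k <> 0) by (intro; subst; rewrite Rabs_R0 in Hk; lra).
      assert (Hh' : - r <= h <= r) by (apply Rabs_le_between; lra).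
      assert (Hk' : - r <= k <= r) by (apply Rabs_le_between; lra).
      assert (A1 := cvx_slope w1 y r Hc1 h k ltac:(lra) Hhk ltac:(lra) Hh0 Hk0).
      assert (A2 := cvx_slope w2 y r Hc2 h k ltac:(lra) Hhk ltac:(lra) Hh0 Hk0).
      assert (E1 : forall t, t <> 0 -> (w1 (y + t) - w1 y) / t = S t + K / 2 * t)
        by (intros t Ht; unfold w1, S; field; auto).
      assert (E2 : forall t, t <> 0 -> (w2 (y + t) - w2 y) / t = - S t + K / 2 * t)
        by (intros t Ht; unfold w2, S; field; auto).
      rewrite !E1 in A1 by auto. rewrite !E2 in A2 by auto.
      rewrite (Rabs_left1 (h - k)) by lra. apply Rabs_le. nra. }
    intros h k Hh Hk. destruct (Rtotal_order h k) as [E|[E|E]].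
    - apply Hmain; auto.
    - subst. rewrite !Rminus_diag, Rabs_R0. lra.
    - rewrite Rabs_minus_sym, (Rabs_minus_sym h). apply Hmain; auto. }
  destruct (lim_cauchy S r (K / 2) Hr ltac:(lra) HS) as [l Hl].
  assert (Hd : is_derive u y l).
  { apply is_derive_Reals. intros eps Heps.
    assert (Hd : 0 < Rmin r (eps / (K + 1))) by (apply Rmin_pos; [lra| apply Rdiv_lt_0_compat; lra]).
    exists (mkposreal _ Hd). intros h Hh0 Hh. simpl in Hh.
    assert (H1 : Rmin r (eps / (K + 1)) <= r) by apply Rmin_l.
    assert (H2 : Rmin r (eps / (K + 1)) <= eps / (K + 1)) by apply Rmin_r.
    assert (H3 : 0 < Rabs h) by (apply Rabs_pos_lt; auto).
    specialize (Hl h ltac:(lra)). unfold S in Hl. eapply Rle_lt_trans. apply Hl.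
    assert ((K + 1) * (eps / (K + 1)) = eps) by (field; lra).
    assert (K / 2 * Rabs h <= (K + 1) * Rabs h) by nra. nra. }
  exists l, (K / 2), r. split; auto. split; [lra|]. split. apply is_derive_unique; auto. split.
  - apply (le_eps _ _ r); auto. intros k Hk1 Hk2.
    set (t := Rmin r (k / (K / 2 + 1))).
    assert (Ht : 0 < t) by (apply Rmin_pos; [lra| apply Rdiv_lt_0_compat; lra]).
    assert (Ht1 : t <= r) by apply Rmin_l. assert (Ht2 : t <= k / (K / 2 + 1)) by apply Rmin_r.
    assert (Ht3 : (K / 2 + 1) * (k / (K / 2 + 1)) = k) by (field; lra).
    assert (Hat : 0 < Rabs t <= r) by (rewrite Rabs_right; lra).
    specialize (Hl t Hat). rewrite (Rabs_right t) in Hl by lra.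
    assert (HSt : Rabs (S t) <= L).
    { unfold S. specialize (HL (y + t) y). replace (y + t - y) with t in HL by ring.
      rewrite (Rabs_right t) in HL by lra. apply Rabs_le_between in HL.
      apply Rabs_le. split; apply (Rmult_le_reg_r t); auto;
      replace ((u (y + t) - u y) / t * t) with (u (y + t) - u y) by (field; lra); lra. }
    assert (Rabs l <= Rabs (S t) + Rabs (S t - l)).
    { replace l with (S t - (S t - l)) at 1 by ring. eapply Rle_trans. apply Rabs_triang.
      rewrite Rabs_Ropp. lra. }
    assert (K / 2 * t <= k) by nra. unfold S in *. lra.
  - split; [intros h Hh; apply Hl; auto| exact Hd].
Qed.
End R1.

Lemma mvt_ge g x1 x2 k : x1 <= x2 ->
  (forall x, x1 <= x <= x2 -> ex_derive g x /\ k <= Derive g x) ->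
  (forall x, x1 <= x <= x2 -> continuity_pt g x) ->
  k * (x2 - x1) <= g x2 - g x1.
Proof.
  intros H12 Hd Hc.
  destruct (MVT_gen g x1 x2 (Derive g)) as [c [Hc1 Hc2]].
  - intros x Hx. rewrite Rmin_left, Rmax_right in Hx by lra. apply Derive_correct. apply Hd; lra.
  - intros x Hx. rewrite Rmin_left, Rmax_right in Hx by lra. apply Hc; auto.
  - rewrite Rmin_left, Rmax_right in Hc1 by lra. rewrite Hc2. destruct (Hd c Hc1) as [_ Hk]. nra.
Qed.

Lemma prop_left g s y c k : s <= y -> g y < c -> 0 <= k ->
  (forall x, s <= x <= y -> continuity_pt g x) ->
  (forall x, s <= x <= y -> g x <= c -> ex_derive g x /\ k <= Derive g x) ->
  g s <= g y - k * (y - s).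
Proof.
  intros Hsy Hgy Hk Hc Hd.
  assert (Hall : forall x, s <= x <= y -> g x < c).
  { destruct (classic (exists t, s <= t <= y /\ c <= g t)) as [[t0 Ht0]|Hn].
    2:{ intros x Hx. destruct (Rlt_dec (g x) c); auto. exfalso; apply Hn; exists x; split; auto; lra. }
    exfalso.
    set (T := fun t => s <= t <= y /\ c <= g t).
    assert (Tb : bound T) by (exists y; intros t [Ht _]; lra).
    destruct (completeness T Tb (ex_intro _ t0 Ht0)) as [ts [Hub Hl]].
    assert (Hs1 : s <= ts) by (apply Rle_trans with t0; [apply Ht0| apply Hub; auto]).
    assert (Hs2 : ts <= y) by (apply Hl; intros t [Ht _]; lra).
    assert (Hcts : c <= g ts).
    { destruct (Rle_dec c (g ts)) as [|Hn]; auto. exfalso. apply Rnot_le_lt in Hn.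
      assert (Hct := Hc ts ltac:(lra)). pose proof (proj1 (continuity_pt_locally g ts) Hct) as Hct'.
      assert (He : 0 < c - g ts) by lra. destruct (Hct' (mkposreal _ He)) as [d Hd'].
      destruct (classic (exists t, T t /\ ts - d < t)) as [[t [Tt Htd]]|Hn2].
      - assert (t <= ts) by (apply Hub; auto). specialize (Hd' t).
        assert (Hb : ball ts d t) by (apply ball_R; rewrite Rabs_left1 by lra; lra).
        specialize (Hd' Hb). simpl in Hd'. apply Rabs_def2 in Hd'. destruct Tt as [_ Tt]. lra.
      - assert (ts <= ts - d). { apply Hl. intros t Tt. destruct (Rle_dec t (ts - d)); auto.
          exfalso; apply Hn2; exists t; split; auto; lra. }
        destruct d; simpl in *; lra. }
    assert (Htsy : ts < y) by (destruct (Req_dec ts y); [subst; lra| lra]).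
    assert (Habove : forall x, ts < x <= y -> g x < c).
    { intros x Hx. destruct (Rlt_dec (g x) c); auto. exfalso.
      assert (x <= ts) by (apply Hub; split; [lra| lra]). lra. }
    assert (Hle : forall x, ts < x <= y -> g x <= g y).
    { intros x Hx. assert (M := mvt_ge g x y k ltac:(lra)).
      assert (k * (y - x) <= g y - g x).
      { apply M. intros z Hz. apply Hd. lra. left; apply Habove; lra. intros z Hz; apply Hc; lra. }
      nra. }
    assert (g ts <= g y).
    { destruct (Rle_dec (g ts) (g y)) as [|Hn]; auto. exfalso. apply Rnot_le_lt in Hn.
      assert (Hct := Hc ts ltac:(lra)). pose proof (proj1 (continuity_pt_locally g ts) Hct) as Hct'.
      assert (He : 0 < g ts - g y) by lra. destruct (Hct' (mkposreal _ He)) as [d Hd'].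
      set (x := ts + Rmin (d / 2) (y - ts)).
      assert (Hx1 : 0 < Rmin (d / 2) (y - ts)) by (apply Rmin_pos; [destruct d; simpl; lra| lra]).
      assert (Hx2 : Rmin (d / 2) (y - ts) <= d / 2) by apply Rmin_l.
      assert (Hx3 : Rmin (d / 2) (y - ts) <= y - ts) by apply Rmin_r.
      assert (Hb : ball ts d x) by (apply ball_R; unfold x; rewrite Rabs_right by lra; destruct d; simpl in *; lra).
      specialize (Hd' x Hb). simpl in Hd'. apply Rabs_def2 in Hd'.
      specialize (Hle x ltac:(unfold x; lra)). lra. }
    lra. }
  assert (M := mvt_ge g s y k Hsy). 
  assert (k * (y - s) <= g y - g s).
  { apply M. intros z Hz. apply Hd; auto. left; apply Hall; auto. auto. }
  lra.
Qed.

Section C.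
Variables (kappa alpha0 alpha1 gamma eta : R) (a : R -> R) (H : R -> R -> R) (phat : R -> R).
Hypothesis Ha : a_assump kappa a.
Hypothesis HH : H_sqc alpha0 alpha1 gamma eta H phat.
Variables (lam0 : R) (u : R -> R) (L : R).
Hypothesis HL : forall x y, Rabs (u x - u y) <= L * Rabs (x - y).
Hypothesis Hsup : visc_super a H lam0 u.
Hypothesis Hsub : visc_sub a H lam0 u.
Variable x0 : R.
Hypothesis Hx0 : a x0 = 0.

Lemma H3u x y p R0 : Rabs p <= R0 -> Rabs (H x p - H y p) <= alpha1 * (pw R0 gamma + 1) * Rabs (x - y).
Proof.
  intros Hp. destruct HH as [_ [Ha1 [Hg [_ [_ [_ [HH3 _]]]]]]].
  eapply Rle_trans. apply HH3. apply Rmult_le_compat_r. apply Rabs_pos.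
  apply Rmult_le_compat_l; [lra|]. assert (pw (Rabs p) gamma <= pw R0 gamma) by (apply pw_mono; lra). lra.
Qed.

Lemma Hmin_le x p : H x (phat x) <= H x p.
Proof.
  destruct HH as [_ [_ [_ [_ [_ [_ [_ [_ [Hm _]]]]]]]]].
  destruct (Req_dec p (phat x)) as [->|Hn]. lra. left; apply Hm; auto.
Qed.

Lemma part0 : H x0 (phat x0) <= lam0.
Proof.
  assert (HL0 := L_nonneg u L HL). assert (Ha1 : 0 < alpha1) by apply HH.
  set (C3 := alpha1 * (pw (2 * L) gamma + 1)).
  assert (HC3 : 0 <= C3) by (unfold C3; assert (0 <= pw (2 * L) gamma) by apply pw_nonneg; nra).
  set (B := 2 * kappa^2 * L^2 + C3 * L + 1).
  assert (HB : 0 < B) by (unfold B; assert (0 <= kappa^2 * L^2) by (apply Rmult_le_pos; apply pow2_ge_0); nra).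
  apply (le_eps _ _ 1); [lra|]. intros k Hk1 Hk2.
  set (e := k / B). assert (He : 0 < e) by (apply Rdiv_lt_0_compat; lra).
  assert (HeB : e * B = k) by (unfold e; field; lra).
  set (RR := L * e + 1).
  assert (HLe : 0 <= L * e) by (apply Rmult_le_pos; lra).
  assert (HRR : 0 < RR) by (unfold RR; lra).
  set (al := - (x0 * x0) / e). set (be := 2 * x0 / e). set (ga := - / e).
  assert (Hq : forall z, u z - qf al be ga z = u z + (z - x0) * (z - x0) / e) by (intros z; unfold qf, al, be, ga; field; lra).
  destruct (continuity_ab_min (fun x => u x - qf al be ga x) (x0 - RR) (x0 + RR) ltac:(lra)
    (fun c _ => psi_cont u L HL al be ga c)) as [m [Hm1 Hm2]].
  assert (Hmx : Rabs (m - x0) <= L * e).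
  { specialize (Hm1 x0 ltac:(lra)). simpl in Hm1. rewrite !Hq in Hm1.
    replace ((x0 - x0) * (x0 - x0) / e) with 0 in Hm1 by (field; lra).
    specialize (HL m x0). apply Rabs_le_between in HL.
    assert (Hd : Rabs (m - x0) * Rabs (m - x0) <= L * e * Rabs (m - x0)).
    { rewrite sq_abs. assert ((m - x0) * (m - x0) / e <= L * Rabs (m - x0)) by lra.
      apply (Rmult_le_compat_r e) in H0; [|lra].
      replace ((m - x0) * (m - x0) / e * e) with ((m - x0)^2) in H0 by (field; lra). lra. }
    assert (0 <= Rabs (m - x0)) by apply Rabs_pos. nra. }
  apply Rabs_le_between in Hmx as Hmx'.
  assert (Hint : x0 - RR < m < x0 + RR) by (unfold RR; lra).
  assert (V := super_min a H lam0 u Hsup al be ga (x0 - RR) (x0 + RR) m Hint Hm1).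
  set (p := be + 2 * ga * m) in *.
  assert (Hp : p = - 2 * (m - x0) / e) by (unfold p, be, ga; field; lra).
  assert (Hpb : Rabs p <= 2 * L).
  { rewrite Hp. unfold Rdiv. rewrite Rabs_mult, Rabs_Rinv by lra. rewrite (Rabs_right e) by lra.
    rewrite Rabs_mult. replace (Rabs (-2)) with 2 by (rewrite Rabs_left by lra; lra).
    apply (Rmult_le_reg_r e); auto. field_simplify; [|lra]. lra. }
  assert (Ham : a m <= kappa^2 * (L * e)^2).
  { eapply Rle_trans. apply (a_zero_bound kappa a Ha m x0 Hx0).
    apply Rmult_le_compat_l. apply pow2_ge_0. rewrite <- (sq_abs (m - x0)).
    assert (0 <= Rabs (m - x0)) by apply Rabs_pos. nra. }
  assert (H3 := H3u x0 m p (2 * L) Hpb). fold C3 in H3. apply Rabs_le_between in H3.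
  assert (Hmn := Hmin_le x0 p).
  assert (Hga : a m * (2 * ga) = - (2 * a m / e)) by (unfold ga; field; lra).
  rewrite Hga in V.
  assert (2 * a m / e <= 2 * kappa^2 * L^2 * e).
  { apply (Rmult_le_reg_r e); auto. replace (2 * a m / e * e) with (2 * a m) by (field; lra). nra. }
  assert (C3 * Rabs (x0 - m) <= C3 * (L * e)).
  { apply Rmult_le_compat_l; auto. rewrite Rabs_minus_sym; auto. }
  assert (2 * kappa ^ 2 * L ^ 2 * e + C3 * (L * e) <= k).
  { rewrite <- HeB. unfold B. nra. }
  lra.
Qed.
End C.

Section C2.
Variables (kappa alpha0 alpha1 gamma eta : R) (a : R -> R) (H : R -> R -> R) (phat : R -> R).
Hypothesis Ha : a_assump kappa a.
Hypothesis HH : H_sqc alpha0 alpha1 gamma eta H phat.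
Variables (lam0 : R) (u : R -> R) (L : R).
Hypothesis HL : forall x y, Rabs (u x - u y) <= L * Rabs (x - y).
Hypothesis Hsup : visc_super a H lam0 u.
Hypothesis Hsub : visc_sub a H lam0 u.
Variable x0 : R.
Hypothesis Hx0 : a x0 = 0.

Lemma intR y : 0 < a y -> exists l, 0 < l /\ l <= Rabs (y - x0) /\
    forall x, y <= x <= y + l -> 0 < a x /\ a x <= 4 * kappa^2 * l^2.
Proof.
  intros Hy. apply (interval_right a (2 * Rabs kappa) (kappa^2) x0 y); auto.
  apply (a_nonneg kappa a Ha). apply (a_lip kappa a Ha). apply (a_zero_bound kappa a Ha).
Qed.

Lemma intL y : 0 < a y -> exists l, 0 < l /\ l <= Rabs (y - x0) /\
    forall x, y - l <= x <= y -> 0 < a x /\ a x <= 4 * kappa^2 * l^2.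
Proof.
  intros Hy. apply (interval_left a (2 * Rabs kappa) (kappa^2) x0 y); auto.
  apply (a_nonneg kappa a Ha). apply (a_lip kappa a Ha). apply (a_zero_bound kappa a Ha).
Qed.

Lemma stepC c mu : lam0 < mu -> (forall p, p < c -> mu < H x0 p) ->
  exists r, 0 < r /\ forall y, 0 < a y -> Rabs (y - x0) < r -> c <= Derive u y.
Proof.
  intros Hmu Hc.
  assert (HL0 := L_nonneg u L HL). assert (Ha1 : 0 < alpha1) by apply HH.
  set (Rc := Rabs c + 3 * L + 2).
  set (C3 := alpha1 * (pw Rc gamma + 1)).
  assert (HC3 : 0 <= C3) by (unfold C3; assert (0 <= pw Rc gamma) by apply pw_nonneg; nra).
  set (D := 2 * C3 + 8 * kappa^2 * (Rabs c + L + 1)).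
  assert (HD : 0 <= D) by (unfold D; assert (0 <= Rabs c) by apply Rabs_pos; assert (0 <= kappa^2) by apply pow2_ge_0; nra).
  set (r := (mu - lam0) / (2 * D + 1)).
  assert (Hr : 0 < r) by (apply Rdiv_lt_0_compat; lra).
  assert (HrD : r * D <= (mu - lam0) / 2).
  { unfold r. apply (Rmult_le_reg_r (2 * D + 1)); [lra|].
    replace ((mu - lam0) / (2 * D + 1) * D * (2 * D + 1)) with ((mu - lam0) * D) by (field; lra). nra. }
  exists r. split; auto. intros y Hy Hyr.
  destruct (u_reg kappa alpha0 alpha1 gamma eta a H phat Ha HH lam0 u L HL Hsup Hsub y Hy)
    as [l [Kr [rr [Hrr [HKr [HDl [Hlb [HS _]]]]]]]].
  rewrite HDl. destruct (Rle_dec c l) as [|Hlc]; auto. apply Rnot_le_lt in Hlc. exfalso.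
  apply Rabs_le_between in Hlb.
  set (c1 := (l + c) / 2).
  destruct (intR y Hy) as [ll [Hll1 [Hll2 Hll3]]].
  set (K := 2 * (c1 + L + 1) / ll).
  assert (HK : 0 < K) by (unfold K, c1; apply Rdiv_lt_0_compat; lra).
  assert (HKll : K * ll = 2 * (c1 + L + 1)) by (unfold K; field; lra).
  set (al := u y - c1 * y - K / 2 * (y * y)). set (be := c1 + K * y). set (ga := - (K / 2)).
  assert (Hpsi : forall x, u x - qf al be ga x = u x - u y - c1 * (x - y) + K / 2 * ((x - y) * (x - y)))
    by (intros x; unfold qf, al, be, ga; field).
  set (h := Rmin (Rmin (ll / 2) rr) ((c - l) / (4 * (Kr + K / 2 + 1)))).
  assert (Hh1 : 0 < h).
  { unfold h. apply Rmin_pos. apply Rmin_pos; lra. apply Rdiv_lt_0_compat; lra. }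
  assert (Hh2 : h <= ll / 2) by (unfold h; eapply Rle_trans; [apply Rmin_l| apply Rmin_l]).
  assert (Hh3 : h <= rr) by (unfold h; eapply Rle_trans; [apply Rmin_l| apply Rmin_r]).
  assert (Hh4 : h <= (c - l) / (4 * (Kr + K / 2 + 1))) by (unfold h; apply Rmin_r).
  assert (Hh5 : (Kr + K / 2) * h <= (c - l) / 4).
  { apply (Rmult_le_compat_l (Kr + K/2 + 1)) in Hh4; [|lra].
    replace ((Kr + K / 2 + 1) * ((c - l) / (4 * (Kr + K / 2 + 1)))) with ((c - l) / 4) in Hh4 by (field; lra).
    nra. }
  assert (Hneg : u (y + h) - qf al be ga (y + h) < 0).
  { rewrite Hpsi. specialize (HS h ltac:(rewrite Rabs_right; lra)). rewrite (Rabs_right h) in HS by lra.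
    apply Rabs_le_between in HS.
    assert (E : u (y + h) - u y = h * ((u (y + h) - u y) / h)) by (field; lra).
    replace (y + h - y) with h by ring. rewrite E.
    assert ((u (y + h) - u y) / h <= l + Kr * h) by lra.
    unfold c1. nra. }
  assert (Hpos : 0 < u (y + ll) - qf al be ga (y + ll)).
  { rewrite Hpsi. replace (y + ll - y) with ll by ring.
    specialize (HL (y + ll) y). replace (y + ll - y) with ll in HL by ring.
    rewrite (Rabs_right ll) in HL by lra. apply Rabs_le_between in HL.
    assert (K / 2 * (ll * ll) = (c1 + L + 1) * ll) by (replace (K / 2 * (ll * ll)) with (K * ll * ll / 2) by field; rewrite HKll; field).
    nra. }
  destruct (continuity_ab_min (fun x => u x - qf al be ga x) y (y + ll) ltac:(lra)
    (fun c _ => psi_cont u L HL al be ga c)) as [m [Hm1 Hm2]].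
  assert (Hmh := Hm1 (y + h) ltac:(lra)). assert (Hml := Hm1 (y + ll) ltac:(lra)). simpl in *.
  assert (Hmy : m <> y).
  { intro E. subst m. rewrite Hpsi in Hmh. replace (y - y) with 0 in Hmh by ring.
    nra. }
  assert (Hmy2 : m <> y + ll) by (intro E; rewrite E in Hmh; lra).
  assert (V := super_min a H lam0 u Hsup al be ga y (y + ll) m ltac:(lra) Hm1).
  set (p := be + 2 * ga * m) in *.
  assert (Hp : p = c1 - K * (m - y)) by (unfold p, be, ga; field).
  assert (Hp1 : c1 - K * ll <= p <= c1).
  { rewrite Hp. split; [|nra]. assert (K * (m - y) <= K * ll) by (apply Rmult_le_compat_l; lra). lra. }
  rewrite HKll in Hp1.
  assert (Hc1 : - L < c1 < c) by (unfold c1; lra).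
  assert (Hpb : Rabs p <= Rc).
  { apply Rabs_le. assert (Hcc := abs_bounds c). unfold Rc. lra. }
  assert (Hpc : mu < H x0 p) by (apply Hc; lra).
  assert (H3 := H3u alpha0 alpha1 gamma eta H phat HH m x0 p Rc Hpb). fold C3 in H3.
  apply Rabs_le_between in H3.
  assert (Hmx : Rabs (m - x0) <= 2 * r).
  { replace (m - x0) with ((m - y) + (y - x0)) by ring. eapply Rle_trans. apply Rabs_triang.
    rewrite Rabs_right by lra. lra. }
  assert (Ham : a m <= 4 * kappa^2 * ll^2) by (apply Hll3; lra).
  assert (Hga : a m * (2 * ga) = - (a m * K)) by (unfold ga; field).
  rewrite Hga in V.
  assert (HamK : a m * K <= 8 * kappa^2 * ll * (c1 + L + 1)).
  { apply (Rmult_le_compat_r K) in Ham; [|lra].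
    replace (4 * kappa ^ 2 * ll ^ 2 * K) with (4 * kappa^2 * ll * (K * ll)) in Ham by ring.
    rewrite HKll in Ham. lra. }
  assert (8 * kappa^2 * ll * (c1 + L + 1) <= 8 * kappa^2 * r * (Rabs c + L + 1)).
  { assert (Hcc := abs_bounds c). assert (0 <= kappa^2) by apply pow2_ge_0.
    assert (ll <= r) by lra. apply Rmult_le_compat; try nra. }
  assert (C3 * Rabs (m - x0) <= C3 * (2 * r)) by (apply Rmult_le_compat_l; auto).
  unfold D in HrD. nra.
Qed.
End C2.

Lemma deriv_bound d A B q : 0 < A <= B -> 0 <= q -> q <= A * d -> q / B <= d.
Proof.
  intros HA Hq Hd. assert (0 <= d) by nra.
  apply (Rmult_le_reg_r B); [lra|]. replace (q / B * B) with q by (field; lra). nra.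
Qed.

Lemma ex_derive_cpt f x : ex_derive f x -> continuity_pt f x.
Proof. intros [l Hl]. apply derivable_continuous_pt. exists l. apply is_derive_Reals; auto. Qed.

Lemma ex_derive_Ropp f x : ex_derive f x -> ex_derive (fun y => - f y) x.
Proof. intros [l Hl]. exists (- l). apply is_derive_Reals. apply (derivable_pt_lim_opp f). apply is_derive_Reals; auto. Qed.

Lemma good1_H alpha0 alpha1 gamma eta H phat x :
  H_sqc alpha0 alpha1 gamma eta H phat -> good1 (H x) (phat x) eta.
Proof.
  intros HH. destruct HH as [Ha0 [Ha1 [Hg [He [HH1 [HH2 [HH3 [Hqc [Hm [HL HR]]]]]]]]]].
  split; auto. split.
  { intros p. destruct (Req_dec p (phat x)) as [->|Hn]. lra. left; apply Hm; auto. }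
  split; [intros; apply HL; auto|]. split; [intros; apply HR; auto|].
  intros R0. exists (alpha1 * pw (2 * Rabs R0 + 1) (gamma - 1)). split.
  apply Rmult_le_pos; [lra| apply pw_nonneg].
  intros p q Hp Hq. eapply Rle_trans. apply HH2. apply Rmult_le_compat_r. apply Rabs_pos.
  apply Rmult_le_compat_l; [lra|]. apply pw_mono. lra.
  assert (R0 <= Rabs R0) by apply RRle_abs. lra.
Qed.

Section Core.
Variables (kappa alpha0 alpha1 gamma eta : R) (a : R -> R) (H : R -> R -> R) (phat : R -> R).
Hypothesis Ha : a_assump kappa a.
Hypothesis HH : H_sqc alpha0 alpha1 gamma eta H phat.
Variables (lam0 lam x0 : R).
Hypothesis Hlam : lam0 < lam.
Hypothesis Hx0 : a x0 = 0.
Variable f : R -> R.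
Hypothesis Hf1 : forall x, 0 < a x -> ex_derive f x.
Hypothesis Hfb : exists M, forall x, 0 < a x -> Rabs (f x) <= M.
Hypothesis Hfeq : forall x, 0 < a x -> a x * Derive f x + H x (f x) = lam.
Variables (u : R -> R) (L : R).
Hypothesis HL : forall x y, Rabs (u x - u y) <= L * Rabs (x - y).
Hypothesis Hsup : visc_super a H lam0 u.
Hypothesis Hsub : visc_sub a H lam0 u.
Hypothesis Hge : forall x, 0 < a x -> f x >= Derive u x.

Let h := H x0.
Let ph := phat x0.
Let Hg : good1 h ph eta := good1_H alpha0 alpha1 gamma eta H phat x0 HH.
Let Hh0 : h ph <= lam0 := part0 kappa alpha0 alpha1 gamma eta a H phat Ha HH lam0 u L HL Hsup x0 Hx0.

Lemma core_lim : filterlim f (near_in_A a x0) (locally (sup_le h lam)).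
Proof.
  assert (Heta : 0 < eta) by apply Hg.
  assert (Ha1 : 0 < alpha1) by apply HH.
  destruct Hfb as [M0 HM0].
  set (M1 := Rabs M0 + 1).
  assert (HM1 : forall x, 0 < a x -> Rabs (f x) <= M1).
  { intros x Hx. specialize (HM0 x Hx). assert (M0 <= Rabs M0) by apply RRle_abs. unfold M1; lra. }
  assert (HM1p : 0 < M1) by (unfold M1; assert (0 <= Rabs M0) by apply Rabs_pos; lra).
  set (C3 := alpha1 * (pw M1 gamma + 1)).
  assert (HC3 : 0 <= C3) by (unfold C3; assert (0 <= pw M1 gamma) by apply pw_nonneg; nra).
  assert (HH3 : forall x, 0 < a x -> Rabs (H x (f x) - H x0 (f x)) <= C3 * Rabs (x - x0)).
  { intros x Hx. apply (H3u alpha0 alpha1 gamma eta H phat HH). apply HM1; auto. }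
  set (P := sup_le h lam).
  set (mu := (lam + lam0) / 2).
  set (Pm := inf_le h lam). set (Pmu := inf_le h mu).
  assert (HPm : Pm < Pmu) by (apply (I6 h ph eta Hg); unfold mu; lra).
  destruct (stepC kappa alpha0 alpha1 gamma eta a H phat Ha HH lam0 u L HL Hsup Hsub x0 Hx0 Pmu mu)
    as [rC [HrC HC]].
  { unfold mu; lra. }
  { intros p Hp. apply (I2 h ph eta Hg); auto. unfold mu; lra. }
  assert (HfC : forall y, 0 < a y -> Rabs (y - x0) < rC -> Pmu <= f y).
  { intros y Hy Hyr. specialize (HC y Hy Hyr). specialize (Hge y Hy). lra. }
  assert (Hk2 : 0 <= kappa^2) by apply pow2_ge_0.
  apply filterlim_locally. intros eps.
  set (e := pos eps). assert (He : 0 < e) by (apply cond_pos).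
  set (dA := eta * e / 8).
  assert (HdA : 0 < dA) by (unfold dA; nra).
  set (rA := dA / (16 * (C3 + 8 * kappa^2 * M1) + 1)).
  assert (HrA : 0 < rA) by (apply Rdiv_lt_0_compat; nra).
  assert (HrA2 : rA * (16 * (C3 + 8 * kappa^2 * M1)) <= dA).
  { unfold rA. apply (Rmult_le_reg_r (16 * (C3 + 8 * kappa ^ 2 * M1) + 1)); [nra|].
    replace (dA / (16 * (C3 + 8 * kappa ^ 2 * M1) + 1) * (16 * (C3 + 8 * kappa ^ 2 * M1)) *
      (16 * (C3 + 8 * kappa ^ 2 * M1) + 1)) with (dA * (16 * (C3 + 8 * kappa ^ 2 * M1))) by (field; nra).
    nra. }
  set (dB := eta * Rmin (e / 4) ((Pmu - Pm) / 2)).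
  assert (HdB : 0 < dB) by (unfold dB; apply Rmult_lt_0_compat; auto; apply Rmin_pos; lra).
  set (rB := dB / (16 * (C3 + 8 * kappa^2 * M1) + 1)).
  assert (HrB : 0 < rB) by (apply Rdiv_lt_0_compat; nra).
  assert (HrB2 : rB * (16 * (C3 + 8 * kappa^2 * M1)) <= dB).
  { unfold rB. apply (Rmult_le_reg_r (16 * (C3 + 8 * kappa ^ 2 * M1) + 1)); [nra|].
    replace (dB / (16 * (C3 + 8 * kappa ^ 2 * M1) + 1) * (16 * (C3 + 8 * kappa ^ 2 * M1)) *
      (16 * (C3 + 8 * kappa ^ 2 * M1) + 1)) with (dB * (16 * (C3 + 8 * kappa ^ 2 * M1))) by (field; nra).
    nra. }
  set (r := Rmin (Rmin rA rB) (rC / 2)).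
  assert (Hr : 0 < r) by (unfold r; apply Rmin_pos; [apply Rmin_pos|]; lra).
  assert (Hr1 : r <= rA) by (unfold r; eapply Rle_trans; [apply Rmin_l| apply Rmin_l]).
  assert (Hr2 : r <= rB) by (unfold r; eapply Rle_trans; [apply Rmin_l| apply Rmin_r]).
  assert (Hr3 : r <= rC / 2) by (unfold r; apply Rmin_r).
  exists (mkposreal r Hr). intros y Hyb Hy. apply ball_R in Hyb. change (Rabs (y - x0) < r) in Hyb. apply ball_R.
  destruct (intL kappa a Ha x0 Hx0 y Hy) as [ll [Hll1 [Hll2 Hll3]]].
  assert (Hxn : forall x, y - ll <= x <= y -> Rabs (x - x0) <= 2 * Rabs (y - x0)).
  { intros x Hx. replace (x - x0) with ((x - y) + (y - x0)) by ring. eapply Rle_trans. apply Rabs_triang.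
    rewrite Rabs_left1 by lra. lra. }
  assert (Hpos4 : 0 < 4 * kappa^2 * ll^2) by (destruct (Hll3 y ltac:(lra)); lra).
  assert (Hcont : forall x, y - ll <= x <= y -> continuity_pt f x).
  { intros x Hx. apply ex_derive_cpt. apply Hf1. apply Hll3; auto. }
  assert (HMy := HM1 y Hy). assert (HMl := HM1 (y - ll) ltac:(apply Hll3; lra)).
  apply Rabs_le_between in HMy. apply Rabs_le_between in HMl.
  apply Rabs_def1.
  -
    destruct (Rlt_dec (f y - P) e) as [|Hn]; auto. exfalso. apply Rnot_lt_le in Hn.
    set (g := fun x => - f x).
    set (k := dA / (4 * kappa^2 * ll^2)).
    assert (Hk : 0 <= k) by (unfold k; apply Rdiv_le_0_compat; lra).
    assert (Prop1 := prop_left g (y - ll) y (- (P + e / 2)) k ltac:(lra) ltac:(unfold g; lra) Hk).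
    assert (Hres : g (y - ll) <= g y - k * (y - (y - ll))).
    { apply Prop1.
      - intros x Hx. apply continuity_pt_opp. apply Hcont; auto.
      - intros x Hx Hgx. unfold g in Hgx. destruct (Hll3 x Hx) as [Hax Hax2].
        split. unfold g. apply ex_derive_Ropp. apply Hf1; auto.
        unfold g. rewrite Derive_opp.
        assert (Hfx : P + e / 2 <= f x) by lra.
        assert (HS4 := S4 h ph eta Hg lam ltac:(lra) (f x) (e / 2) ltac:(lra) ltac:(unfold P in Hfx; lra)).
        assert (H3x := HH3 x Hax). apply Rabs_le_between in H3x.
        assert (C3 * Rabs (x - x0) <= C3 * (2 * rA)).
        { apply Rmult_le_compat_l; auto. specialize (Hxn x Hx). lra. }
        assert (Hq : dA <= a x * (- Derive f x)).
        { specialize (Hfeq x Hax). unfold h in HS4.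
          assert (E2 : eta * (e / 2) / 2 = 2 * dA) by (unfold dA; field).
          assert (HCA : 2 * C3 * rA <= dA).
          { assert (0 <= kappa^2 * M1 * rA) by (apply Rmult_le_pos; [nra| lra]). nra. }
          lra. }
        unfold k. apply (deriv_bound _ (a x)); lra. }
    unfold g in Hres. replace (y - (y - ll)) with ll in Hres by ring.
    assert (Hkll : k * ll = dA / (4 * kappa^2 * ll)) by (unfold k; field; split; nra).
    rewrite Hkll in Hres.
    assert (Hb : dA <= 4 * kappa^2 * ll * (2 * M1)).
    { assert (Hd1 : dA / (4 * kappa ^ 2 * ll) <= 2 * M1) by lra.
      apply (Rmult_le_compat_l (4 * kappa^2 * ll)) in Hd1; [|nra].
      replace (4 * kappa ^ 2 * ll * (dA / (4 * kappa ^ 2 * ll))) with dA in Hd1 by (field; nra). lra. }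
    assert (ll <= rA) by lra.
    assert (8 * kappa^2 * M1 * ll <= 8 * kappa^2 * M1 * rA) by (apply Rmult_le_compat_l; nra).
    assert (0 <= C3 * rA) by nra. nra.
  -
    destruct (Rlt_dec (- e) (f y - P)) as [|Hn]; auto. exfalso. apply Rnot_lt_le in Hn.
    set (k := dB / (8 * kappa^2 * ll^2)).
    assert (Hk : 0 <= k) by (unfold k; apply Rdiv_le_0_compat; lra).
    assert (Prop1 := prop_left f (y - ll) y (P - e / 2) k ltac:(lra) ltac:(lra) Hk).
    assert (Hres : f (y - ll) <= f y - k * (y - (y - ll))).
    { apply Prop1. exact Hcont.
      intros x Hx Hfx. destruct (Hll3 x Hx) as [Hax Hax2].
      split. apply Hf1; auto.
      assert (Hxr : Rabs (x - x0) < rC) by (specialize (Hxn x Hx); lra).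
      assert (HC1 := HfC x Hax Hxr).
      assert (Hh : h (f x) <= lam - dB).
      { destruct (Rle_dec ph (f x)) as [Hp|Hp].
        - assert (HS5 := S5 h ph eta Hg lam ltac:(lra) (f x) (e / 2) ltac:(lra) Hp ltac:(unfold P in Hfx; lra)).
          assert (Rmin (e / 4) ((Pmu - Pm) / 2) <= e / 4) by apply Rmin_l.
          unfold dB. nra.
        - assert (HI5 := I5 h ph eta Hg lam (f x) (Pmu - Pm) ltac:(lra) ltac:(lra) ltac:(lra) ltac:(unfold Pm in *; lra)).
          assert (Rmin (e / 4) ((Pmu - Pm) / 2) <= (Pmu - Pm) / 2) by apply Rmin_r.
          unfold dB. nra. }
      assert (H3x := HH3 x Hax). apply Rabs_le_between in H3x.
      assert (C3 * Rabs (x - x0) <= C3 * (2 * rB)).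
      { apply Rmult_le_compat_l; auto. specialize (Hxn x Hx). lra. }
      assert (Hq : dB / 2 <= a x * Derive f x).
      { specialize (Hfeq x Hax). unfold h in Hh.
        assert (HCB : 2 * C3 * rB <= dB / 2).
        { assert (0 <= kappa^2 * M1 * rB) by (apply Rmult_le_pos; [nra| lra]). nra. }
        lra. }
      unfold k. replace (dB / (8 * kappa ^ 2 * ll ^ 2)) with ((dB / 2) / (4 * kappa^2 * ll^2)) by (field; nra).
      apply (deriv_bound _ (a x)); lra. }
    replace (y - (y - ll)) with ll in Hres by ring.
    assert (Hkll : k * ll = dB / (8 * kappa^2 * ll)) by (unfold k; field; split; nra).
    rewrite Hkll in Hres.
    assert (Hb : dB <= 8 * kappa^2 * ll * (2 * M1)).
    { assert (Hd1 : dB / (8 * kappa ^ 2 * ll) <= 2 * M1) by lra.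
      apply (Rmult_le_compat_l (8 * kappa^2 * ll)) in Hd1; [|nra].
      replace (8 * kappa ^ 2 * ll * (dB / (8 * kappa ^ 2 * ll))) with dB in Hd1 by (field; nra). lra. }
    assert (ll <= rB) by lra.
    assert (8 * kappa^2 * M1 * ll <= 8 * kappa^2 * M1 * rB) by (apply Rmult_le_compat_l; nra).
    assert (0 <= C3 * rB) by nra. nra.
Qed.
End Core.

Lemma ex_derive_negc (g : R -> R) z : ex_derive g (- z) -> ex_derive (fun y => g (- y)) z.
Proof. intros Hg. apply (ex_derive_comp g (fun y => - y)); auto. auto_derive; auto. Qed.

Lemma Derive_negc (g : R -> R) z : ex_derive g (- z) -> Derive (fun y => g (- y)) z = - Derive g (- z).
Proof.
  intros Hg. rewrite (Derive_comp g (fun y => - y)); auto. 2: auto_derive; auto.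
  replace (Derive (fun y => - y) z) with (-1). ring.
  symmetry; apply is_derive_unique. auto_derive; auto.
Qed.

Lemma cont_opp z : continuous (fun y : R => - y) z.
Proof. apply (continuous_opp (fun y : R => y)). apply continuous_id. Qed.

Lemma refl_C2 (phi : R -> R) : C2 phi -> C2 (fun y => phi (- y)) /\
  (forall z, Derive (fun y => phi (- y)) z = - Derive phi (- z)) /\
  (forall z, Derive (Derive (fun y => phi (- y))) z = Derive (Derive phi) (- z)).
Proof.
  intros [H1 [H2 H3]].
  assert (D1 : forall z, Derive (fun y => phi (- y)) z = - Derive phi (- z)) by (intros; apply Derive_negc; auto).
  assert (D2 : forall z, Derive (Derive (fun y => phi (- y))) z = Derive (Derive phi) (- z)).
  { intros z. rewrite (Derive_ext _ (fun z => - Derive phi (- z))) by auto.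
    rewrite Derive_opp. rewrite Derive_negc by auto. ring. }
  split; [|split; auto].
  split; [|split].
  - intros z; apply ex_derive_negc; auto.
  - intros z. apply (ex_derive_ext (fun z => - Derive phi (- z))). intros; symmetry; auto.
    apply ex_derive_Ropp. apply ex_derive_negc; auto.
  - intros z. apply (continuous_ext (fun z => Derive (Derive phi) (- z))). intros; symmetry; auto.
    apply (continuous_comp (fun y => - y) (Derive (Derive phi))). apply cont_opp. auto.
Qed.

Section Refl.
Variables (kappa alpha0 alpha1 gamma eta : R) (a : R -> R) (H : R -> R -> R) (phat : R -> R).
Let a' := fun x => a (- x).
Let H' := fun x p => H (- x) (- p).
Let phat' := fun x => - phat (- x).

Lemma refl_a : a_assump kappa a -> a_assump kappa a'.
Proof.
  intros [H1 H2]. split. intros; apply H1. intros x y. unfold a'.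
  replace (x - y) with (- (- x - - y)) by ring. rewrite Rabs_Ropp. apply H2.
Qed.

Lemma refl_H : H_sqc alpha0 alpha1 gamma eta H phat -> H_sqc alpha0 alpha1 gamma eta H' phat'.
Proof.
  intros [Ha0 [Ha1 [Hg [He [HH1 [HH2 [HH3 [Hqc [Hm [HL HR]]]]]]]]]].
  unfold H', phat'. split; auto. split; auto. split; auto. split; auto. split.
  { intros x p. rewrite <- (Rabs_Ropp p). apply HH1. } split.
  { intros x p q. replace (p - q) with (- (- p - - q)) by ring. rewrite Rabs_Ropp.
    rewrite <- (Rabs_Ropp p), <- (Rabs_Ropp q). apply HH2. } split.
  { intros x y p. replace (x - y) with (- (- x - - y)) by ring. rewrite Rabs_Ropp.
    rewrite <- (Rabs_Ropp p). apply HH3. } split.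
  { intros x p q t Hpq Ht. replace (- (t * p + (1 - t) * q)) with (t * (- p) + (1 - t) * (- q)) by ring.
    apply Hqc; auto. intro; apply Hpq; lra. } split.
  { intros x p Hp. rewrite Ropp_involutive. apply Hm. intro; apply Hp; lra. } split.
  { intros x p1 p2 Hp. specialize (HR (- x) (- p2) (- p1) ltac:(lra)).
    replace (p1 - p2) with (- p2 - - p1) by ring. lra. }
  { intros x p1 p2 Hp. specialize (HL (- x) (- p2) (- p1) ltac:(lra)).
    replace (p1 - p2) with (- p2 - - p1) by ring. lra. }
Qed.

Lemma refl_super lam0 u : visc_super a H lam0 u -> visc_super a' H' lam0 (fun x => u (- x)).
Proof.
  intros [Hc Hs]. split.
  - intros x. apply (continuous_comp (fun y => - y) u). apply cont_opp. auto.
  - intros phi x1 HC [Ht [d [Hd Ht2]]].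
    destruct (refl_C2 phi HC) as [HC' [D1 D2]].
    specialize (Hs (fun y => phi (- y)) (- x1) HC').
    rewrite D1, D2, Ropp_involutive in Hs. unfold a', H'. apply Hs. split.
    + rewrite Ropp_involutive. auto.
    + exists d. split; auto. intros y Hy. specialize (Ht2 (- y)). rewrite Ropp_involutive in Ht2. apply Ht2.
      replace (- y - x1) with (- (y - - x1)) by ring. rewrite Rabs_Ropp; auto.
Qed.

Lemma refl_sub lam0 u : visc_sub a H lam0 u -> visc_sub a' H' lam0 (fun x => u (- x)).
Proof.
  intros [Hc Hs]. split.
  - intros x. apply (continuous_comp (fun y => - y) u). apply cont_opp. auto.
  - intros phi x1 HC [Ht [d [Hd Ht2]]].
    destruct (refl_C2 phi HC) as [HC' [D1 D2]].
    specialize (Hs (fun y => phi (- y)) (- x1) HC').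
    rewrite D1, D2, Ropp_involutive in Hs. unfold a', H'. apply Hs. split.
    + rewrite Ropp_involutive. auto.
    + exists d. split; auto. intros y Hy. specialize (Ht2 (- y)). rewrite Ropp_involutive in Ht2. apply Ht2.
      replace (- y - x1) with (- (y - - x1)) by ring. rewrite Rabs_Ropp; auto.
Qed.
End Refl.

Lemma filterlim_refl (a f : R -> R) x0 S :
  filterlim (fun x => - f (- x)) (near_in_A (fun x => a (- x)) (- x0)) (locally S) ->
  filterlim f (near_in_A a x0) (locally (- S)).
Proof.
  intros Hl. apply filterlim_locally. intros eps. apply filterlim_locally with (eps := eps) in Hl.
  unfold near_in_A, within in *. destruct Hl as [d Hd]. exists d. intros y Hy Hay.
  specialize (Hd (- y)). apply ball_R in Hy. apply ball_R.
  assert (Hb : ball (- x0) d (- y)).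
  { apply ball_R. replace (- y - - x0) with (- (y - x0)) by ring. rewrite Rabs_Ropp; auto. }
  specialize (Hd Hb). rewrite Ropp_involutive in Hd. specialize (Hd Hay). apply ball_R in Hd.
  replace (f y - - S) with (- (- f y - S)) by ring. rewrite Rabs_Ropp; auto.
Qed.

Theorem mainTheorem10
  (kappa alpha0 alpha1 gamma eta : R) (a : R -> R) (H : R -> R -> R) (phat : R -> R)
  (Ha : a_assump kappa a) (HA1 : A1' a)
  (HH : H_sqc alpha0 alpha1 gamma eta H phat)
  (lam0 : R) (Hlam0 : lambda0 a H = Finite lam0)
  (x0 : R) (Hx0 : a x0 = 0)
  (Hacc : forall eps, 0 < eps -> exists y, 0 < a y /\ Rabs (y - x0) < eps)
  (lam : R) (Hlam : lam > lam0)
  (f : R -> R)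
  (Hf1 : forall x, 0 < a x -> ex_derive f x /\ continuous (Derive f) x)
  (Hfb : exists M, forall x, 0 < a x -> Rabs (f x) <= M)
  (Hfeq : forall x, 0 < a x -> a x * Derive f x + H x (f x) = lam)
  (u : R -> R) (Hul : lipschitz u) (Hu : visc_sol a H lam0 u) :
  lamhat H x0 <= lam0 /\
  ((forall x, 0 < a x -> f x >= Derive u x) ->
     filterlim f (near_in_A a x0) (locally (pplus H lam x0)) /\
     pplus H lam x0 > pplus H lam0 x0 /\ pplus H lam0 x0 >= phat x0) /\
  ((forall x, 0 < a x -> f x <= Derive u x) ->
     filterlim f (near_in_A a x0) (locally (pminus H lam x0)) /\
     pminus H lam x0 < pminus H lam0 x0 /\ pminus H lam0 x0 <= phat x0).
Proof.
  destruct Hul as [L HL]. destruct Hu as [Hsup Hsub].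
  assert (Hf1' : forall x, 0 < a x -> ex_derive f x) by (intros x Hx; apply Hf1; auto).
  assert (Hg := good1_H alpha0 alpha1 gamma eta H phat x0 HH).
  assert (Hh0 := part0 kappa alpha0 alpha1 gamma eta a H phat Ha HH lam0 u L HL Hsup x0 Hx0).
  split; [|split].
  - unfold lamhat. rewrite (lamhat_eq (H x0) (phat x0) eta Hg). exact Hh0.
  - intros Hge. split; [|split].
    + exact (core_lim kappa alpha0 alpha1 gamma eta a H phat Ha HH lam0 lam x0 Hlam Hx0 f Hf1' Hfb Hfeq
               u L HL Hsup Hsub Hge).
    + apply (S6 (H x0) (phat x0) eta Hg lam0 lam Hlam Hh0).
    + apply Rle_ge. apply (S1 (H x0) (phat x0) eta Hg lam0 Hh0).
  - intros Hle. split; [|split].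
    + unfold pminus. change (real (Glb_Rbar (fun p => H x0 p <= lam))) with (inf_le (H x0) lam).
      rewrite (inf_sup (H x0) (phat x0) eta Hg lam) by lra.
      apply filterlim_refl.
      assert (E : sup_le (fun p => H x0 (- p)) lam = sup_le ((fun x p => H (- x) (- p)) (- x0)) lam).
      { cbv beta. replace (- - x0) with x0 by ring. reflexivity. }
      rewrite E.
      apply (core_lim kappa alpha0 alpha1 gamma eta (fun x => a (- x)) (fun x p => H (- x) (- p))
               (fun x => - phat (- x)) (refl_a kappa a Ha) (refl_H alpha0 alpha1 gamma eta H phat HH)
               lam0 lam (- x0) Hlam ltac:(cbv beta; rewrite Ropp_involutive; auto)
               (fun x => - f (- x))) with (u := fun x => u (- x)) (L := L).
      * intros x Hx. apply ex_derive_Ropp. apply ex_derive_negc. apply Hf1'; auto.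
      * destruct Hfb as [M HM]. exists M. intros x Hx. rewrite Rabs_Ropp. apply HM; auto.
      * intros x Hx. rewrite Derive_opp, Derive_negc by (apply Hf1'; auto).
        rewrite !Ropp_involutive. apply Hfeq; auto.
      * intros x y. replace (x - y) with (- (- x - - y)) by ring. rewrite Rabs_Ropp. apply HL.
      * apply (refl_super a H lam0 u Hsup).
      * apply (refl_sub a H lam0 u Hsub).
      * intros x Hx.
        destruct (u_reg kappa alpha0 alpha1 gamma eta a H phat Ha HH lam0 u L HL Hsup Hsub (- x) Hx)
          as [l [K [r [_ [_ [_ [_ [_ Hd]]]]]]]].
        rewrite Derive_negc by (exists l; auto). specialize (Hle (- x) Hx). lra.
    + apply (I6 (H x0) (phat x0) eta Hg lam0 lam Hlam Hh0).
    + apply (I1 (H x0) (phat x0) eta Hg lam0 Hh0).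
Qed.
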